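(* Let $h_{00},h_{11},h_{22},h_{33}>0$, $\beta = \frac{1}{6(\det h)^2}$ with $\det h = h_{00}h_{11}h_{22}h_{33}$, and let $p(x,y)=x^4+x^3y+xy^3+y^4$, $q(x,y)=5x^4+3x^3y-xy^3-3y^4$. Consider $\dot g_{00} = -\beta\, p(g_{11},g_{22})\, g_{00}^3$, $\dot g_{11} = -\beta\, q(g_{11},g_{22})\, g_{00}^2 g_{11}$, $\dot g_{22} = -\beta\, q(g_{22},g_{11})\, g_{00}^2 g_{22}$, $\dot g_{33} = 3\beta\, p(g_{11},g_{22})\, g_{00}^2 g_{33}$, with $g_{ii}(0)=h_{ii}$. Then the solution exists for all $t\ge 0$ and: $g_{00},g_{11},g_{22}\to 0$; $g_{33}$ is increasing and $g_{33}\to\infty$; $g_{11}/g_{22}\to 1$. If $h_{11}=h_{22}$ then, with $\mu = h_{00}^3h_{33}/\det h$, $g_{00} = \mu^{1/2}(24\mu\beta t + h_{11}^{-6})^{-1/6}$, $g_{11}=g_{22} = (24\mu\beta t + h_{11}^{-6})^{-1/6}$, $g_{33} = h_{11}^3 h_{33}(24\mu\beta t + h_{11}^{-6})^{1/2}$. If $h_{11}<h_{22}$, then $g_{11}<g_{22}$ for all $t$, $g_{22}$ is decreasing, $g_{11}/g_{22}$ is increasing, and $(g_{11}g_{22})^{25} = \eta\,(g_{22}-g_{11})^4\left(2g_{22}^2+g_{11}g_{22}+2g_{11}^2\right)^3$ for all $t$, where $\eta = \frac{(h_{11}h_{22})^{25}}{(h_{22}-h_{11})^4(2h_{22}^2+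h_{11}h_{22}+2h_{11}^2)^3}$.
   Context: This system is Bach flow $\partial_t g = B$, $g(0)=h$, on $\mathbb{R}\times Solv$ written in a diagonalizing basis: a left-invariant frame $\{\partial_0,e_1,e_2,e_3\}$ with $[e_i,e_j]=\sum \varepsilon_{ijl}E^{lk}e_k$, $E=\mathrm{diag}(-1,1,0)$, in which the left-invariant product metric is $g=\mathrm{diag}(g_{00},g_{11},g_{22},g_{33})$; $B$ is the Bach tensor. Along the flow $g_{00}g_{11}g_{22}g_{33}=\det h$ is constant. (The case $h_{11}>h_{22}$ is symmetric.) *)

(* Defs.v *)
From Stdlib Require Import Reals Lra.
Open Scope R_scope.

Definition pB (x y : R) : R := x^4 + x^3*y + x*y^3 + y^4.
Definition qB (x y : R) : R := 5*x^4 + 3*x^3*y - x*y^3 - 3*y^4.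

Definition rhs00 (b g0 g1 g2 g3 : R) : R := - b * pB g1 g2 * g0^3.
Definition rhs11 (b g0 g1 g2 g3 : R) : R := - b * qB g1 g2 * g0^2 * g1.
Definition rhs22 (b g0 g1 g2 g3 : R) : R := - b * qB g2 g1 * g0^2 * g2.
Definition rhs33 (b g0 g1 g2 g3 : R) : R := 3 * b * pB g1 g2 * g0^2 * g3.

Definition right_cont0 (f : R -> R) : Prop :=
  forall eps, 0 < eps -> exists delta, 0 < delta /\
    forall t, 0 <= t < delta -> Rabs (f t - f 0) < eps.

Definition is_global_solution (b h0 h1 h2 h3 : R) (g0 g1 g2 g3 : R -> R) : Prop :=
  g0 0 = h0 /\ g1 0 = h1 /\ g2 0 = h2 /\ g3 0 = h3 /\
  right_cont0 g0 /\ right_cont0 g1 /\ right_cont0 g2 /\ right_cont0 g3 /\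
  forall t, 0 < t ->
    derivable_pt_lim g0 t (rhs00 b (g0 t) (g1 t) (g2 t) (g3 t)) /\
    derivable_pt_lim g1 t (rhs11 b (g0 t) (g1 t) (g2 t) (g3 t)) /\
    derivable_pt_lim g2 t (rhs22 b (g0 t) (g1 t) (g2 t) (g3 t)) /\
    derivable_pt_lim g3 t (rhs33 b (g0 t) (g1 t) (g2 t) (g3 t)).

Definition tends_at_infty (f : R -> R) (L : R) : Prop :=
  forall eps, 0 < eps -> exists T, forall t, T <= t -> Rabs (f t - L) < eps.

Definition diverges_at_infty (f : R -> R) : Prop :=
  forall M, exists T, forall t, T <= t -> M < f t.

Definition strict_incr_on_nonneg (f : R -> R) : Prop :=
  forall s t, 0 <= s -> s < t -> f s < f t.
Definition strict_decr_on_nonneg (f : R -> R) : Prop :=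
  forall s t, 0 <= s -> s < t -> f t < f s.

(* Main.v *)
From Coquelicot Require Import Coquelicot.
From Stdlib Require Import Ranalysis5 ClassicalEpsilon.
Require Import Defs.
From Stdlib Require Import Reals Lra Psatz.
Open Scope R_scope.

Lemma dpl_eq f x l l' : derivable_pt_lim f x l -> l = l' -> derivable_pt_lim f x l'.
Proof. intros H ->; exact H. Qed.

Lemma mono_closed f f' a b : a <= b ->
  (forall c, a <= c <= b -> derivable_pt_lim f c (f' c)) ->
  (forall c, a < c < b -> 0 <= f' c) -> f a <= f b.
Proof.
  intros Hab Hd Hs. destruct (Rle_lt_or_eq_dec _ _ Hab) as [Hlt|Heq].
  - destruct (MVT_cor2 f f' a b Hlt Hd) as [c [Hc1 Hc2]].
    assert (0 <= f' c * (b - a)) by (apply Rmult_le_pos; [apply Hs; lra| lra]). lra.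
  - subst; lra.
Qed.

Lemma smono_closed f f' a b : a < b ->
  (forall c, a <= c <= b -> derivable_pt_lim f c (f' c)) ->
  (forall c, a < c < b -> 0 < f' c) -> f a < f b.
Proof.
  intros Hab Hd Hs.
  destruct (MVT_cor2 f f' a b Hab Hd) as [c [Hc1 Hc2]].
  assert (0 < f' c * (b - a)) by (apply Rmult_lt_0_compat; [apply Hs; lra| lra]). lra.
Qed.

Lemma mono_open0 f f' T : 0 <= T ->
  (forall c, 0 < c -> derivable_pt_lim f c (f' c)) -> right_cont0 f ->
  (forall c, 0 < c < T -> 0 <= f' c) -> f 0 <= f T.
Proof.
  intros HT Hd Hc Hs. destruct (Rle_lt_or_eq_dec _ _ HT) as [Hlt|Heq]; [|subst; lra].
  destruct (Rle_or_lt (f 0) (f T)) as [|Hgt]; [auto|exfalso].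
  destruct (Hc (f 0 - f T)) as [d [Hd0 Hd1]]; [lra|].
  set (s := Rmin (d/2) (T/2)).
  assert (Hs0 : 0 < s) by (unfold s; apply Rmin_glb_lt; lra).
  assert (Hs1 : s <= d/2) by apply Rmin_l.
  assert (Hs2 : s <= T/2) by apply Rmin_r.
  assert (H1 := Hd1 s ltac:(lra)). apply Rabs_def2 in H1.
  assert (f s <= f T).
  { apply (mono_closed f f'); [lra| |].
    - intros c Hc'; apply Hd; lra.
    - intros c Hc'; apply Hs; lra. }
  lra.
Qed.

Lemma mono_sol f f' : (forall c, 0 < c -> derivable_pt_lim f c (f' c)) -> right_cont0 f ->
  (forall c, 0 < c -> 0 <= f' c) -> forall s t, 0 <= s <= t -> f s <= f t.
Proof.
  intros Hd Hc Hs s t Hst. destruct (Rle_lt_or_eq_dec 0 s (proj1 Hst)) as [Hlt|Heq].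
  - apply (mono_closed f f'); [lra| |]; intros c Hc'; [apply Hd|apply Hs]; lra.
  - subst. apply (mono_open0 f f'); auto; [lra|]. intros c Hc'; apply Hs; lra.
Qed.

Lemma smono_sol f f' : (forall c, 0 < c -> derivable_pt_lim f c (f' c)) -> right_cont0 f ->
  (forall c, 0 < c -> 0 < f' c) -> strict_incr_on_nonneg f.
Proof.
  intros Hd Hc Hs s t H0s Hst.
  assert (f s <= f ((s+t)/2)).
  { apply (mono_sol f f'); auto; [|lra]. intros c Hc'; left; apply Hs; lra. }
  assert (f ((s+t)/2) < f t).
  { apply (smono_closed f f'); [lra| |]; intros c Hc'; [apply Hd|apply Hs]; lra. }
  lra.
Qed.

Lemma rc_opp f : right_cont0 f -> right_cont0 (fun t => - f t).
Proof.
  intros H e He. destruct (H e He) as [d [Hd H1]]. exists d; split; auto.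
  intros t Ht. replace (- f t - - f 0) with (- (f t - f 0)) by ring. rewrite Rabs_Ropp. auto.
Qed.

Lemma const_sol f f' : (forall c, 0 < c -> derivable_pt_lim f c (f' c)) -> right_cont0 f ->
  (forall c, 0 < c -> f' c = 0) -> forall t, 0 <= t -> f t = f 0.
Proof.
  intros Hd Hc Hs t Ht.
  assert (f 0 <= f t) by (apply (mono_sol f f'); auto; [intros c Hc'; rewrite Hs; lra| lra]).
  assert ((fun t => - f t) 0 <= (fun t => - f t) t).
  { apply (mono_sol (fun t => - f t) (fun t => - f' t)); auto.
    - intros c Hc'. apply derivable_pt_lim_opp. auto.
    - apply rc_opp; auto.
    - intros c Hc'; rewrite Hs; lra.
    - lra. }
  simpl in *; lra.
Qed.

Definition ext0 (f : R -> R) t := f (Rmax t 0).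

Lemma dpl_cont f x l : derivable_pt_lim f x l -> continuity_pt f x.
Proof. intros H. apply derivable_continuous_pt. exists l; exact H. Qed.

Lemma ext0_cont f : right_cont0 f -> (forall c, 0 < c -> continuity_pt f c) ->
  forall c, continuity_pt (ext0 f) c.
Proof.
  intros Hr Hc c. destruct (Rtotal_order c 0) as [Hlt|[Heq|Hgt]].
  - apply (continuity_pt_locally_ext (fun _ => f 0) _ (-c)); [lra| |apply continuity_pt_const; intros ??; auto].
    intros y Hy. unfold R_dist in Hy. apply Rabs_def2 in Hy. unfold ext0. rewrite Rmax_right; auto; lra.
  - subst. intros e He. destruct (Hr e He) as [d [Hd H1]]. exists d; split; auto.
    intros x [_ Hx]. simpl in *. unfold R_dist in *. unfold ext0. rewrite (Rmax_right 0 0) by lra.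
    destruct (Rle_or_lt x 0).
    + rewrite Rmax_right by auto. rewrite Rminus_diag, Rabs_R0; auto.
    + rewrite Rmax_left by lra. apply H1. apply Rabs_def2 in Hx. lra.
  - apply (continuity_pt_locally_ext f _ c); [lra| |apply Hc; auto].
    intros y Hy. unfold R_dist in Hy. apply Rabs_def2 in Hy. unfold ext0. rewrite Rmax_left; auto; lra.
Qed.

Lemma rc_of_cont g w : continuity_pt g 0 -> (forall s, 0 <= s -> w s = g s) -> right_cont0 w.
Proof.
  intros Hg Hw e He. destruct (Hg e He) as [d [Hd H1]]. exists d; split; auto.
  intros t Ht. rewrite !Hw by lra.
  destruct (Req_dec t 0) as [->|Hne]; [rewrite Rminus_diag, Rabs_R0; auto|].
  apply (H1 t). split. unfold D_x, no_cond; auto.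
  simpl; unfold R_dist. rewrite Rminus_0_r, Rabs_right; lra.
Qed.

Lemma sign_ivt u : (forall c, continuity_pt (ext0 u) c) -> 0 < u 0 ->
  (forall t, 0 <= t -> u t <> 0) -> forall t, 0 <= t -> 0 < u t.
Proof.
  intros Hc H0 Hn t Ht. destruct (Rle_or_lt (u t) 0) as [Hle|]; auto. exfalso.
  destruct (Rle_lt_or_eq_dec _ _ Hle) as [Hlt|Heq]; [|apply (Hn t); auto].
  assert (Ht0 : 0 < t) by (destruct (Rle_lt_or_eq_dec _ _ Ht); auto; subst; lra).
  destruct (IVT (fun x => - ext0 u x) 0 t) as [z [Hz1 Hz2]].
  - intro x. apply continuity_pt_opp. apply Hc.
  - auto.
  - unfold ext0; rewrite Rmax_right by lra; lra.
  - unfold ext0; rewrite Rmax_left by lra; lra.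
  - unfold ext0 in Hz2. rewrite Rmax_left in Hz2 by lra. apply (Hn z); lra.
Qed.

Lemma bound_sq u : (forall c, continuity_pt (ext0 u) c) -> forall T, 0 <= T ->
  exists M, forall t, 0 <= t <= T -> u t ^ 2 <= M.
Proof.
  intros Hc T HT. destruct (continuity_ab_maj (fun x => ext0 u x * ext0 u x) 0 T HT) as [Mx [H1 H2]].
  - intros c _. apply continuity_pt_mult; apply Hc.
  - exists (ext0 u Mx * ext0 u Mx). intros t Ht. specialize (H1 t Ht). simpl in H1.
    unfold ext0 in H1 at 1 2. rewrite Rmax_left in H1 by lra. lra.
Qed.

Lemma pos_lin u a : (forall c, 0 < c -> derivable_pt_lim u c (u c * a c)) -> right_cont0 u ->
  (forall c, continuity_pt (ext0 u) c) -> 0 < u 0 ->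
  (forall T, 0 < T -> exists L, forall c, 0 < c < T -> - L <= a c) ->
  forall t, 0 <= t -> 0 < u t.
Proof.
  intros Hd Hr Hc H0 Hb. apply sign_ivt; auto.
  intros t Ht. destruct (Rle_lt_or_eq_dec _ _ Ht) as [Hlt|Heq]; [|subst; lra].
  destruct (Hb t Hlt) as [L HL].
  set (w := fun s => u s * u s * exp (2 * L * s)).
  assert (w 0 <= w t).
  { apply (mono_open0 w (fun s => 2 * (u s * u s) * (a s + L) * exp (2 * L * s))); auto.
    - intros c Hc'. unfold w. eapply dpl_eq.
      + apply derivable_pt_lim_mult; [apply derivable_pt_lim_mult; apply Hd; auto|].
        apply (derivable_pt_lim_comp (fun s => 2 * L * s) exp).
        * eapply dpl_eq; [apply derivable_pt_lim_scal; apply derivable_pt_lim_id| reflexivity].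
        * apply derivable_pt_lim_exp.
      + simpl. unfold comp. ring.
    - apply (rc_of_cont (fun s => ext0 u s * ext0 u s * exp (2 * L * s))).
      + apply continuity_pt_mult; [apply continuity_pt_mult; apply Hc|].
        apply (continuity_pt_comp (fun s => 2 * L * s) exp).
        * apply continuity_pt_scal. apply derivable_continuous_pt. apply derivable_pt_id.
        * apply derivable_continuous_pt. apply derivable_pt_exp.
      + intros s Hs. unfold w, ext0. rewrite Rmax_left by lra. auto.
    - intros c Hc'. specialize (HL c Hc'). apply Rmult_le_pos; [|left; apply exp_pos].
      apply Rmult_le_pos; [|lra]. nra. }
  unfold w in H. rewrite Rmult_0_r, exp_0 in H.
  intro Hu. rewrite Hu in H. nra.
Qed.
Lemma xy_bnd x y M : x^2 <= M -> y^2 <= M -> x*y <= M /\ - (x*y) <= M.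
Proof. intros. split; nra. Qed.
Lemma qB_bound x y M : x^2 <= M -> y^2 <= M -> qB x y <= 9 * M^2.
Proof. intros H1 H2. unfold qB. assert (0 <= M) by nra. destruct (xy_bnd x y M H1 H2).
 assert (x^4 <= M^2) by nra. assert (y^4 <= M^2) by nra.
 assert (x^2*(x*y) <= M^2) by nra. assert (y^2*(- (x*y)) <= M^2) by nra. nra. Qed.
Lemma pB_bound x y M : x^2 <= M -> y^2 <= M -> pB x y <= 4 * M^2.
Proof. intros H1 H2. unfold pB. assert (0 <= M) by nra. destruct (xy_bnd x y M H1 H2).
 assert (x^4 <= M^2) by nra. assert (y^4 <= M^2) by nra.
 assert (x^2*(x*y) <= M^2) by nra. assert (y^2*((x*y)) <= M^2) by nra. nra. Qed.

Lemma sol_cont b h0 h1 h2 h3 g0 g1 g2 g3 : is_global_solution b h0 h1 h2 h3 g0 g1 g2 g3 ->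
  (forall c, continuity_pt (ext0 g0) c) /\ (forall c, continuity_pt (ext0 g1) c) /\
  (forall c, continuity_pt (ext0 g2) c) /\ (forall c, continuity_pt (ext0 g3) c).
Proof.
  intros (E0&E1&E2&E3&R0&R1&R2&R3&D).
  repeat split; apply ext0_cont; auto; intros c Hc; destruct (D c Hc) as (?&?&?&?); eapply dpl_cont; eauto.
Qed.

Lemma bound_a b g0 g1 g2 T : 0 < b ->
  (forall c, continuity_pt (ext0 g0) c) -> (forall c, continuity_pt (ext0 g1) c) ->
  (forall c, continuity_pt (ext0 g2) c) -> 0 < T ->
  exists L, forall c, 0 < c < T ->
    - L <= - b * qB (g1 c) (g2 c) * g0 c ^ 2 /\
    - L <= - b * qB (g2 c) (g1 c) * g0 c ^ 2 /\
    - L <= - b * pB (g1 c) (g2 c) * g0 c ^ 2.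
Proof.
  intros Hb C0 C1 C2 HT.
  destruct (bound_sq g0 C0 T ltac:(lra)) as [M0 H0].
  destruct (bound_sq g1 C1 T ltac:(lra)) as [M1 H1].
  destruct (bound_sq g2 C2 T ltac:(lra)) as [M2 H2].
  set (M := Rmax M1 M2).
  exists (b * (9 * M^2) * M0). intros c Hc.
  assert (A0 := H0 c ltac:(lra)). assert (A1 := H1 c ltac:(lra)). assert (A2 := H2 c ltac:(lra)).
  assert (B1 : g1 c ^ 2 <= M) by (eapply Rle_trans; [apply A1|apply Rmax_l]).
  assert (B2 : g2 c ^ 2 <= M) by (eapply Rle_trans; [apply A2|apply Rmax_r]).
  assert (Q1 := qB_bound _ _ _ B1 B2). assert (Q2 := qB_bound _ _ _ B2 B1).
  assert (P1 := pB_bound _ _ _ B1 B2).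
  assert (0 <= g0 c ^ 2) by nra. assert (0 <= M) by nra.
  assert (Hm : 4 * M^2 <= 9 * M^2) by nra.
  repeat split.
  - assert (qB (g1 c) (g2 c) * g0 c ^ 2 <= 9 * M^2 * M0) by nra. nra.
  - assert (qB (g2 c) (g1 c) * g0 c ^ 2 <= 9 * M^2 * M0) by nra. nra.
  - assert (pB (g1 c) (g2 c) * g0 c ^ 2 <= 9 * M^2 * M0) by nra. nra.
Qed.

Lemma pB_pos x y : 0 < x -> 0 < y -> 0 < pB x y.
Proof. intros. unfold pB. assert (0 < x^4) by (apply pow_lt; auto).
  assert (0 < x^3*y) by (apply Rmult_lt_0_compat; [apply pow_lt|]; auto).
  assert (0 < x*y^3) by (apply Rmult_lt_0_compat; [|apply pow_lt]; auto).
  assert (0 < y^4) by (apply pow_lt; auto). lra. Qed.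

Lemma sol_pos b h0 h1 h2 h3 g0 g1 g2 g3 : 0 < b -> 0 < h0 -> 0 < h1 -> 0 < h2 -> 0 < h3 ->
  is_global_solution b h0 h1 h2 h3 g0 g1 g2 g3 ->
  forall t, 0 <= t -> 0 < g0 t /\ 0 < g1 t /\ 0 < g2 t /\ 0 < g3 t.
Proof.
  intros Hb P0 P1 P2 P3 Hs.
  destruct (sol_cont _ _ _ _ _ _ _ _ _ Hs) as (C0&C1&C2&C3).
  destruct Hs as (E0&E1&E2&E3&R0&R1&R2&R3&D).
  assert (Q0 : forall t, 0 <= t -> 0 < g0 t).
  { apply (pos_lin g0 (fun c => - b * pB (g1 c) (g2 c) * g0 c ^ 2)); auto; [| lra |].
    - intros c Hc. destruct (D c Hc) as (H&_). eapply dpl_eq; [apply H|]. unfold rhs00; ring.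
    - intros T HT. destruct (bound_a b g0 g1 g2 T Hb C0 C1 C2 HT) as [L HL].
      exists L; intros c Hc; apply HL; auto. }
  assert (Q1 : forall t, 0 <= t -> 0 < g1 t).
  { apply (pos_lin g1 (fun c => - b * qB (g1 c) (g2 c) * g0 c ^ 2)); auto; [| lra |].
    - intros c Hc. destruct (D c Hc) as (_&H&_). eapply dpl_eq; [apply H|]. unfold rhs11; ring.
    - intros T HT. destruct (bound_a b g0 g1 g2 T Hb C0 C1 C2 HT) as [L HL].
      exists L; intros c Hc; apply HL; auto. }
  assert (Q2 : forall t, 0 <= t -> 0 < g2 t).
  { apply (pos_lin g2 (fun c => - b * qB (g2 c) (g1 c) * g0 c ^ 2)); auto; [| lra |].
    - intros c Hc. destruct (D c Hc) as (_&_&H&_). eapply dpl_eq; [apply H|]. unfold rhs22; ring.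
    - intros T HT. destruct (bound_a b g0 g1 g2 T Hb C0 C1 C2 HT) as [L HL].
      exists L; intros c Hc; apply HL; auto. }
  assert (Q3 : forall t, 0 <= t -> 0 < g3 t).
  { apply (pos_lin g3 (fun c => 3 * b * pB (g1 c) (g2 c) * g0 c ^ 2)); auto; [| lra |].
    - intros c Hc. destruct (D c Hc) as (_&_&_&H). eapply dpl_eq; [apply H|]. unfold rhs33; ring.
    - intros T HT. exists 0. intros c Hc.
      assert (0 < pB (g1 c) (g2 c)) by (apply pB_pos; [apply Q1|apply Q2]; lra).
      assert (0 < g0 c ^ 2) by (apply pow_lt; apply Q0; lra).
      assert (0 < b * pB (g1 c) (g2 c)) by (apply Rmult_lt_0_compat; auto). nra. }
  intros t Ht; repeat split; auto.
Qed.

Lemma dpl_powf f t l n : derivable_pt_lim f t l ->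
  derivable_pt_lim (fun x => f x ^ n) t (INR n * f t ^ pred n * l).
Proof. intros H. apply (derivable_pt_lim_comp f (fun y => y ^ n)); auto. apply derivable_pt_lim_pow. Qed.

Lemma cont_powf f t n : continuity_pt f t -> continuity_pt (fun x => f x ^ n) t.
Proof. intros H. apply (continuity_pt_comp f (fun y => y ^ n)); auto.
  apply derivable_continuous_pt; apply derivable_pt_pow. Qed.

Lemma K_alg U V W U' V' W' :
 (INR 4 * U^3 * U' * V^3 + U^4 * (INR 3 * V^2 * V')) * W^25 - (INR 25 * W^24 * W') * (U^4 * V^3)
 = U^3*V^2*W^24*(4*U'*V*W + 3*U*V'*W - 25*U*V*W').
Proof. simpl; ring. Qed.

Lemma K_id c x y :
 4*((- c * qB y x * y)-(- c * qB x y * x))*(2*y^2+x*y+2*x^2)*(x*y) + 3*(y - x)*(4*y*(- c * qB y x * y) + (- c * qB x y * x)*y + x*(- c * qB y x * y) + 4*x*(- c * qB x y * x))*(x*y) - 25*(y - x)*(2*y^2+x*y+2*x^2)*((- c * qB x y * x)*y+x*(- c * qB y x * y)) = 0.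
Proof. unfold qB; ring. Qed.

Definition Kq (x y : R) := (y - x)^4 * (2*y^2+x*y+2*x^2)^3 / (x*y)^25.

Lemma sol_cons b h0 h1 h2 h3 g0 g1 g2 g3 : 0 < b -> 0 < h0 -> 0 < h1 -> 0 < h2 -> 0 < h3 ->
  is_global_solution b h0 h1 h2 h3 g0 g1 g2 g3 ->
  forall t, 0 <= t -> g0 t ^ 3 * g3 t = h0 ^ 3 * h3 /\ g0 t * g1 t * g2 t * g3 t = h0 * h1 * h2 * h3 /\
    Kq (g1 t) (g2 t) = Kq h1 h2.
Proof.
  intros Hb P0 P1 P2 P3 Hs.
  assert (Pos := sol_pos _ _ _ _ _ _ _ _ _ Hb P0 P1 P2 P3 Hs).
  destruct (sol_cont _ _ _ _ _ _ _ _ _ Hs) as (C0&C1&C2&C3).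
  destruct Hs as (E0&E1&E2&E3&R0&R1&R2&R3&D).
  intros t Ht. split; [|split].
  - rewrite <- E0, <- E3.
    apply (const_sol (fun t => g0 t ^ 3 * g3 t) (fun _ => 0)); auto.
    + intros c Hc. destruct (D c Hc) as (H0&_&_&H3). eapply dpl_eq.
      * apply derivable_pt_lim_mult; [apply dpl_powf; apply H0| apply H3].
      * unfold rhs00, rhs33; simpl; ring.
    + apply (rc_of_cont (fun t => ext0 g0 t ^ 3 * ext0 g3 t)).
      * apply continuity_pt_mult; [apply cont_powf|]; auto.
      * intros s Hs; unfold ext0; rewrite Rmax_left by lra; auto.
  - rewrite <- E0, <- E1, <- E2, <- E3.
    apply (const_sol (fun t => g0 t * g1 t * g2 t * g3 t) (fun _ => 0)); auto.
    + intros c Hc. destruct (D c Hc) as (H0&H1&H2&H3). eapply dpl_eq.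
      * repeat apply derivable_pt_lim_mult; eauto.
      * unfold rhs00, rhs11, rhs22, rhs33, qB, pB; simpl; ring.
    + apply (rc_of_cont (fun t => ext0 g0 t * ext0 g1 t * ext0 g2 t * ext0 g3 t)).
      * repeat apply continuity_pt_mult; auto.
      * intros s Hs; unfold ext0; rewrite Rmax_left by lra; auto.
  - rewrite <- E1, <- E2.
    apply (const_sol (fun t => Kq (g1 t) (g2 t)) (fun _ => 0)); auto.
    + intros c Hc. destruct (D c Hc) as (H0&H1&H2&H3).
      destruct (Pos c ltac:(lra)) as (Q0&Q1&Q2&Q3).
      assert (HU : derivable_pt_lim (fun t => g2 t - g1 t) c (rhs22 b (g0 c) (g1 c) (g2 c) (g3 c) - rhs11 b (g0 c) (g1 c) (g2 c) (g3 c)))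
        by (apply derivable_pt_lim_minus; auto).
      assert (HV : derivable_pt_lim (fun t => 2 * g2 t ^ 2 + g1 t * g2 t + 2 * g1 t ^ 2) c
        (2 * (INR 2 * g2 c ^ 1 * rhs22 b (g0 c) (g1 c) (g2 c) (g3 c)) +
         (rhs11 b (g0 c) (g1 c) (g2 c) (g3 c) * g2 c + g1 c * rhs22 b (g0 c) (g1 c) (g2 c) (g3 c)) +
         2 * (INR 2 * g1 c ^ 1 * rhs11 b (g0 c) (g1 c) (g2 c) (g3 c)))).
      { apply derivable_pt_lim_plus; [apply derivable_pt_lim_plus|].
        - apply derivable_pt_lim_scal. apply dpl_powf; auto.
        - apply derivable_pt_lim_mult; auto.
        - apply derivable_pt_lim_scal. apply dpl_powf; auto. }
      assert (HW : derivable_pt_lim (fun t => g1 t * g2 t) c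
        (rhs11 b (g0 c) (g1 c) (g2 c) (g3 c) * g2 c + g1 c * rhs22 b (g0 c) (g1 c) (g2 c) (g3 c)))
        by (apply derivable_pt_lim_mult; auto).
      assert (HN := derivable_pt_lim_mult _ _ _ _ _ (dpl_powf _ _ _ 4 HU) (dpl_powf _ _ _ 3 HV)).
      assert (HDn := dpl_powf _ _ _ 25 HW).
      assert (Hne : (fun t => g1 t * g2 t) c ^ 25 <> 0).
      { apply pow_nonzero. simpl. apply Rgt_not_eq. apply Rmult_lt_0_compat; auto. }
      assert (HK := derivable_pt_lim_div _ _ _ _ _ HN HDn Hne).
      unfold Kq. eapply dpl_eq; [apply HK|].
      unfold Rsqr, mult_fct. simpl pred. cbv beta.
      rewrite K_alg.
      replace (4 * (rhs22 b (g0 c) (g1 c) (g2 c) (g3 c) - rhs11 b (g0 c) (g1 c) (g2 c) (g3 c)) *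
   (2 * g2 c ^ 2 + g1 c * g2 c + 2 * g1 c ^ 2) * (g1 c * g2 c) +
   3 * (g2 c - g1 c) *
   (2 * (INR 2 * g2 c ^ 1 * rhs22 b (g0 c) (g1 c) (g2 c) (g3 c)) +
    (rhs11 b (g0 c) (g1 c) (g2 c) (g3 c) * g2 c + g1 c * rhs22 b (g0 c) (g1 c) (g2 c) (g3 c)) +
    2 * (INR 2 * g1 c ^ 1 * rhs11 b (g0 c) (g1 c) (g2 c) (g3 c))) * (g1 c * g2 c) -
   25 * (g2 c - g1 c) * (2 * g2 c ^ 2 + g1 c * g2 c + 2 * g1 c ^ 2) *
   (rhs11 b (g0 c) (g1 c) (g2 c) (g3 c) * g2 c + g1 c * rhs22 b (g0 c) (g1 c) (g2 c) (g3 c))) with 0.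
      * unfold Rdiv; ring.
      * symmetry. unfold rhs11, rhs22. simpl INR.
        rewrite <- (K_id (b * g0 c ^ 2) (g1 c) (g2 c)). unfold qB. ring.
    + apply (rc_of_cont (fun t => Kq (ext0 g1 t) (ext0 g2 t))).
      * unfold Kq. apply continuity_pt_div.
        -- apply continuity_pt_mult; apply cont_powf.
           ++ apply continuity_pt_minus; auto.
           ++ apply continuity_pt_plus; [apply continuity_pt_plus|].
              ** apply continuity_pt_scal; apply cont_powf; auto.
              ** apply continuity_pt_mult; auto.
              ** apply continuity_pt_scal; apply cont_powf; auto.
        -- apply cont_powf. apply continuity_pt_mult; auto.
        -- unfold ext0. rewrite Rmax_right by lra. rewrite E1, E2. apply pow_nonzero.
           apply Rgt_not_eq. apply Rmult_lt_0_compat; auto.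
      * intros s Hs; unfold ext0; rewrite Rmax_left by lra; auto.
Qed.

Lemma pB_lower x y : 0 < x -> 0 < y -> 2 * (x*y)^2 <= pB x y.
Proof. intros. unfold pB. assert (0 < x^3*y) by (apply Rmult_lt_0_compat; [apply pow_lt|]; auto).
  assert (0 < x*y^3) by (apply Rmult_lt_0_compat; [|apply pow_lt]; auto).
  assert (0 <= (x^2 - y^2)^2) by (apply pow2_ge_0). replace ((x*y)^2) with (x^2*y^2) by ring.
  assert (x^4 + y^4 - 2*(x^2*y^2) = (x^2-y^2)^2) by ring. lra. Qed.

Lemma sol_g0_decay b h0 h1 h2 h3 g0 g1 g2 g3 : 0 < b -> 0 < h0 -> 0 < h1 -> 0 < h2 -> 0 < h3 ->
  is_global_solution b h0 h1 h2 h3 g0 g1 g2 g3 ->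
  let k := 12 * b * ((h0*h1*h2*h3)/(h0^3*h3))^2 in
  forall t, 0 <= t -> k * t <= / g0 t ^ 6.
Proof.
  intros Hb P0 P1 P2 P3 Hs k.
  assert (Pos := sol_pos _ _ _ _ _ _ _ _ _ Hb P0 P1 P2 P3 Hs).
  assert (Cons := sol_cons _ _ _ _ _ _ _ _ _ Hb P0 P1 P2 P3 Hs).
  destruct (sol_cont _ _ _ _ _ _ _ _ _ Hs) as (C0&C1&C2&C3).
  destruct Hs as (E0&E1&E2&E3&R0&R1&R2&R3&D).
  intros t Ht.
  assert (H : (fun t => 1 / g0 t ^ 6 - k * t) 0 <= (fun t => 1 / g0 t ^ 6 - k * t) t).
  { apply (mono_sol (fun t => 1 / g0 t ^ 6 - k * t) (fun c => 6 * b * pB (g1 c) (g2 c) / g0 c ^ 4 - k)); auto; [| | |lra].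
    - intros c Hc. destruct (D c Hc) as (H0&_). destruct (Pos c ltac:(lra)) as (Q0&_).
      assert (Hne : g0 c ^ 6 <> 0) by (apply pow_nonzero; lra).
      assert (HH := derivable_pt_lim_div (fun _ => 1) (fun t => g0 t ^ 6) c 0 _
         (derivable_pt_lim_const 1 c) (dpl_powf _ _ _ 6 H0) Hne).
      eapply dpl_eq.
      + apply derivable_pt_lim_minus; [|apply derivable_pt_lim_scal; apply derivable_pt_lim_id].
        exact HH.
      + unfold rhs00, Rsqr. simpl. field. lra.
    - apply (rc_of_cont (fun t => 1 / ext0 g0 t ^ 6 - k * t)).
      + apply continuity_pt_minus.
        * apply continuity_pt_div; [apply continuity_pt_const; intros ??; auto|apply cont_powf; auto|]. unfold ext0; rewrite Rmax_right by lra.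
          rewrite E0; apply pow_nonzero; lra.
        * apply continuity_pt_scal. apply derivable_continuous_pt; apply derivable_pt_id.
      + intros s Hs; unfold ext0; rewrite Rmax_left by lra; auto.
    - intros c Hc. destruct (Pos c ltac:(lra)) as (Q0&Q1&Q2&Q3).
      destruct (Cons c ltac:(lra)) as (K1&K2&_).
      assert (Hw : g1 c * g2 c = (h0*h1*h2*h3)/(h0^3*h3) * g0 c ^ 2).
      { rewrite <- K1, <- K2. field. split; lra. }
      assert (Hp := pB_lower _ _ Q1 Q2). rewrite Hw in Hp.
      assert (0 < g0 c ^ 4) by (apply pow_lt; auto).
      cut (k <= 6 * b * pB (g1 c) (g2 c) / g0 c ^ 4); [lra|]. unfold k. apply (Rmult_le_reg_r (g0 c ^ 4)); auto.
      replace (6 * b * pB (g1 c) (g2 c) / g0 c ^ 4 * g0 c ^ 4) with (6 * b * pB (g1 c) (g2 c)) by (field; lra).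
      replace (12 * b * (h0 * h1 * h2 * h3 / (h0 ^ 3 * h3)) ^ 2 * g0 c ^ 4) with
        (6 * b * (2 * ((h0 * h1 * h2 * h3 / (h0 ^ 3 * h3)) * g0 c ^ 2) ^ 2)) by ring.
      apply Rmult_le_compat_l; lra. }
  cbv beta in H. rewrite E0 in H. unfold Rdiv in H. rewrite !Rmult_1_l in H. assert (0 < / h0 ^ 6) by (apply Rinv_0_lt_compat, pow_lt; auto). lra.
Qed.
Lemma ratio_alg x y A eps : 0 < x -> 0 < y -> 0 < eps -> Kq x y = A ->
  A / 125 * (x*y)^20 <= Rmin (1/16) (eps^4/8) -> Rabs (x/y - 1) < eps.
Proof.
  intros Hx Hy He HK Hs.
  set (e0 := Rmin (1/16) (eps^4/8)) in *.
  assert (He1 : e0 <= 1/16) by apply Rmin_l. assert (He2 : e0 <= eps^4/8) by apply Rmin_r.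
  set (r := x / y). assert (Hr : x = r * y) by (unfold r; field; lra).
  assert (Hr0 : 0 < r) by (unfold r; apply Rdiv_lt_0_compat; auto).
  set (V := 2*y^2+x*y+2*x^2).
  assert (HV : 5 * (x*y) <= V) by (unfold V; assert (0 <= (y-x)^2) by apply pow2_ge_0; nra).
  assert (Hxy : 0 < x*y) by nra.
  assert (HV3 : 125 * (x*y)^3 <= V^3).
  { replace (125 * (x*y)^3) with ((5*(x*y))^3) by ring. apply pow_incr; lra. }
  assert (HE : (y - x)^4 * V^3 = A * (x*y)^25).
  { unfold Kq in HK. fold V in HK. rewrite <- HK. field. lra. }
  assert (H4 : 0 <= (y-x)^4) by (replace ((y-x)^4) with (((y-x)^2)^2) by ring; apply pow2_ge_0).
  assert (H1 : (y - x)^4 * (125 * (x*y)^3) <= A * (x*y)^25).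
  { rewrite <- HE. apply Rmult_le_compat_l; auto. }
  assert (Hxy3 : 0 < (x*y)^3) by (apply pow_lt; auto).
  assert (H2 : (y - x)^4 <= A/125 * (x*y)^20 * (x*y)^2).
  { apply (Rmult_le_reg_r (125 * (x*y)^3)); [lra|].
    replace (A / 125 * (x * y) ^ 20 * (x * y) ^ 2 * (125 * (x * y) ^ 3)) with (A * (x*y)^25) by (field).
    auto. }
  assert (Hy4 : 0 < y^4) by (apply pow_lt; auto).
  assert (H3 : (1 - r)^4 <= e0 * r^2).
  { apply (Rmult_le_reg_r (y^4)); auto.
    replace ((1 - r)^4 * y^4) with ((y - x)^4) by (rewrite Hr; ring).
    apply (Rle_trans _ _ _ H2).
    replace (e0 * r^2 * y^4) with (e0 * (x*y)^2) by (rewrite Hr; ring).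
    apply Rmult_le_compat_r; [apply pow2_ge_0|auto]. }
  assert (Hr2 : r < 2).
  { destruct (Rlt_or_le r 2) as [|Hge]; auto. exfalso.
    assert (r/2 <= r - 1) by lra.
    assert ((r/2)^4 <= (r-1)^4) by (apply pow_incr; lra).
    replace ((1-r)^4) with ((r-1)^4) in H3 by ring.
    assert (r^4/16 <= r^2/16) by (replace (r^4/16) with ((r/2)^4) by field; nra).
    nra. }
  assert (H5 : (1 - r)^4 < eps^4).
  { assert (e0 * r^2 <= e0 * 4) by (apply Rmult_le_compat_l; [unfold e0; apply Rmin_glb; [lra| ]; assert (0 < eps^4) by (apply pow_lt; lra); lra|nra]).
    assert (0 < eps^4) by (apply pow_lt; lra). lra. }
  destruct (Rlt_or_le (Rabs (r - 1)) eps) as [|Hge]; auto. exfalso.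
  assert (eps^4 <= Rabs (r-1) ^4) by (apply pow_incr; lra).
  rewrite RPow_abs in H. replace ((r-1)^4) with ((1-r)^4) in H by ring.
  rewrite Rabs_right in H. lra.
  replace ((1-r)^4) with (((1-r)^2)^2) by ring. apply Rle_ge, pow2_ge_0.
Qed.

Lemma pow_le_self z n : 0 <= z <= 1 -> z ^ (S n) <= z.
Proof. intros Hz. simpl. assert (z ^ n <= 1 ^ n) by (apply pow_incr; lra). rewrite pow1 in H.
  assert (0 <= z ^ n) by (apply pow_le; lra). nra. Qed.

Lemma small_lt_eps u eps n : 0 < u -> 0 < eps -> u ^ n < eps ^ n -> u < eps.
Proof. intros Hu He H. destruct (Rlt_or_le u eps); auto.
  assert (eps ^ n <= u ^ n) by (apply pow_incr; lra). lra. Qed.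

Lemma sol_props b h0 h1 h2 h3 g0 g1 g2 g3 : 0 < b -> 0 < h0 -> 0 < h1 -> 0 < h2 -> 0 < h3 ->
  is_global_solution b h0 h1 h2 h3 g0 g1 g2 g3 ->
  tends_at_infty g0 0 /\ tends_at_infty g1 0 /\ tends_at_infty g2 0 /\
  strict_incr_on_nonneg g3 /\ diverges_at_infty g3 /\ tends_at_infty (fun t => g1 t / g2 t) 1.
Proof.
  intros Hb P0 P1 P2 P3 Hs.
  assert (Pos := sol_pos _ _ _ _ _ _ _ _ _ Hb P0 P1 P2 P3 Hs).
  assert (Cons := sol_cons _ _ _ _ _ _ _ _ _ Hb P0 P1 P2 P3 Hs).
  assert (Dec := sol_g0_decay _ _ _ _ _ _ _ _ _ Hb P0 P1 P2 P3 Hs). cbv zeta in Dec.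
  set (k := 12 * b * (h0 * h1 * h2 * h3 / (h0 ^ 3 * h3)) ^ 2) in Dec.
  assert (Hk : 0 < k).
  { unfold k. apply Rmult_lt_0_compat; [lra|]. apply pow_lt. apply Rdiv_lt_0_compat.
    repeat apply Rmult_lt_0_compat; auto. apply Rmult_lt_0_compat; auto. apply pow_lt; auto. }
  set (m := h0 * h1 * h2 * h3 / (h0 ^ 3 * h3)).
  assert (Hm : 0 < m).
  { unfold m. apply Rdiv_lt_0_compat.
    repeat apply Rmult_lt_0_compat; auto. apply Rmult_lt_0_compat; auto. apply pow_lt; auto. }
  assert (Hw : forall t, 0 <= t -> g1 t * g2 t = m * g0 t ^ 2).
  { intros t Ht. destruct (Cons t Ht) as (K1&K2&_). destruct (Pos t Ht) as (Q0&_&_&Q3).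
    unfold m. rewrite <- K1, <- K2. field. split; lra. }
  assert (G0 : forall d, 0 < d -> exists T, 0 <= T /\ forall t, T <= t -> g0 t < d).
  { intros d Hd. assert (0 < d ^ 6) by (apply pow_lt; auto).
    exists (1 / (k * d ^ 6) + 1). split.
    { assert (0 < 1 / (k * d^6)) by (apply Rdiv_lt_0_compat; [lra|apply Rmult_lt_0_compat; auto]). lra. }
    intros t Ht.
    assert (Ht0 : 0 < t) by (assert (0 < 1 / (k * d^6)) by (apply Rdiv_lt_0_compat; [lra|apply Rmult_lt_0_compat; auto]); lra).
    destruct (Pos t ltac:(lra)) as (Q0&_).
    apply (small_lt_eps _ _ 6); auto.
    assert (Hkt : / d ^ 6 < k * t).
    { apply (Rmult_lt_reg_l (/ k)). apply Rinv_0_lt_compat; auto.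
      rewrite <- Rmult_assoc, Rinv_l, Rmult_1_l by lra.
      replace (/ k * / d^6) with (1 / (k * d^6)) by (field; lra). lra. }
    assert (H6 := Dec t ltac:(lra)).
    assert (0 < g0 t ^ 6) by (apply pow_lt; auto).
    assert (Hi : / d ^ 6 < / g0 t ^ 6) by lra.
    destruct (Rlt_or_le (g0 t ^ 6) (d ^ 6)) as [|Hge]; auto.
    assert (/ g0 t ^ 6 <= / d ^ 6) by (apply Rinv_le_contravar; auto). lra. }
  assert (W0 : forall d, 0 < d -> exists T, 0 <= T /\ forall t, T <= t -> g1 t * g2 t < d).
  { intros d Hd. destruct (G0 (Rmin 1 (d / (m+1)))) as [T [HT HT']].
    { apply Rmin_glb_lt; [lra|apply Rdiv_lt_0_compat; lra]. }
    exists T; split; auto. intros t Ht. specialize (HT' t Ht).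
    assert (A1 : g0 t < 1) by (eapply Rlt_le_trans; [apply HT'|apply Rmin_l]).
    assert (A2 : g0 t < d / (m+1)) by (eapply Rlt_le_trans; [apply HT'|apply Rmin_r]).
    destruct (Pos t ltac:(lra)) as (Q0&_).
    rewrite Hw by lra.
    assert (g0 t ^ 2 <= g0 t) by (apply (pow_le_self _ 1); lra).
    assert (m * g0 t ^ 2 <= m * g0 t) by (apply Rmult_le_compat_l; lra).
    assert (m * g0 t < m * (d / (m+1))) by (apply Rmult_lt_compat_l; auto).
    assert (m * (d / (m+1)) < d).
    { apply (Rmult_lt_reg_r (m+1)); [lra|]. replace (m * (d / (m+1)) * (m+1)) with (m * d) by (field; lra). nra. }
    lra. }
  assert (HA : 0 <= Kq h1 h2).
  { unfold Kq. apply Rmult_le_pos; [apply Rmult_le_pos|].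
    - replace ((h2-h1)^4) with (((h2-h1)^2)^2) by ring. apply pow2_ge_0.
    - apply pow_le. assert (0 < h1*h2) by (apply Rmult_lt_0_compat; auto). nra.
    - left. apply Rinv_0_lt_compat. apply pow_lt. apply Rmult_lt_0_compat; auto. }
  assert (RT : tends_at_infty (fun t => g1 t / g2 t) 1).
  { intros eps He. set (e0 := Rmin (1/16) (eps^4/8)).
    assert (He0 : 0 < e0) by (unfold e0; apply Rmin_glb_lt; [lra| assert (0 < eps^4) by (apply pow_lt; lra); lra]).
    set (A := Kq h1 h2) in *.
    destruct (W0 (Rmin 1 (125 * e0 / (A + 1)))) as [T [HT HT']].
    { apply Rmin_glb_lt; [lra|apply Rdiv_lt_0_compat; lra]. }
    exists T. intros t Ht. specialize (HT' t Ht).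
    destruct (Pos t ltac:(lra)) as (Q0&Q1&Q2&_). destruct (Cons t ltac:(lra)) as (_&_&KK).
    apply (ratio_alg _ _ A); auto.
    set (z := g1 t * g2 t) in *.
    assert (Hz0 : 0 < z) by (unfold z; apply Rmult_lt_0_compat; auto).
    assert (A1 : z < 1) by (eapply Rlt_le_trans; [apply HT'|apply Rmin_l]).
    assert (A2 : z < 125 * e0 / (A+1)) by (eapply Rlt_le_trans; [apply HT'|apply Rmin_r]).
    assert (z ^ 20 <= z) by (apply (pow_le_self _ 19); lra).
    fold e0.
    assert (A / 125 * z ^ 20 <= A / 125 * z) by (apply Rmult_le_compat_l; [apply Rmult_le_pos; lra|auto]).
    assert (A / 125 * z <= A / 125 * (125 * e0 / (A + 1))) by (apply Rmult_le_compat_l; [apply Rmult_le_pos; lra|lra]).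
    assert (A / 125 * (125 * e0 / (A + 1)) <= e0).
    { replace (A / 125 * (125 * e0 / (A + 1))) with (e0 * (A / (A+1))) by (field; lra).
      assert (A / (A+1) <= 1) by (apply (Rmult_le_reg_r (A+1)); [lra|]; unfold Rdiv; rewrite Rmult_assoc, Rinv_l; lra).
      nra. }
    lra. }
  split; [|split; [|split; [|split; [|split; [|exact RT]]]]].
  - intros eps He. destruct (G0 eps He) as [T [HT HT']]. exists T. intros t Ht.
    destruct (Pos t ltac:(lra)) as (Q0&_). rewrite Rminus_0_r, Rabs_right by lra. auto.
  - intros eps He. destruct (RT (1/2) ltac:(lra)) as [T1 HT1].
    destruct (W0 (eps^2/2)) as [T2 [HT2 HT2']]. { assert (0 < eps^2) by (apply pow_lt; lra). lra. }
    exists (Rmax T1 T2). intros t Ht.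
    assert (Ht1 : T1 <= t) by (eapply Rle_trans; [apply Rmax_l|apply Ht]).
    assert (Ht2 : T2 <= t) by (eapply Rle_trans; [apply Rmax_r|apply Ht]).
    specialize (HT1 t Ht1). specialize (HT2' t Ht2). apply Rabs_def2 in HT1.
    destruct (Pos t ltac:(lra)) as (Q0&Q1&Q2&_).
    rewrite Rminus_0_r, Rabs_right by lra. apply (small_lt_eps _ _ 2); auto.
    replace (g1 t ^ 2) with ((g1 t / g2 t) * (g1 t * g2 t)) by (field; lra).
    assert (0 < g1 t * g2 t) by (apply Rmult_lt_0_compat; auto).
    assert (g1 t / g2 t * (g1 t * g2 t) <= 2 * (g1 t * g2 t)) by (apply Rmult_le_compat_r; lra).
    lra.
  - intros eps He. destruct (RT (1/2) ltac:(lra)) as [T1 HT1].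
    destruct (W0 (eps^2/2)) as [T2 [HT2 HT2']]. { assert (0 < eps^2) by (apply pow_lt; lra). lra. }
    exists (Rmax T1 T2). intros t Ht.
    assert (Ht1 : T1 <= t) by (eapply Rle_trans; [apply Rmax_l|apply Ht]).
    assert (Ht2 : T2 <= t) by (eapply Rle_trans; [apply Rmax_r|apply Ht]).
    specialize (HT1 t Ht1). specialize (HT2' t Ht2). apply Rabs_def2 in HT1.
    destruct (Pos t ltac:(lra)) as (Q0&Q1&Q2&_).
    rewrite Rminus_0_r, Rabs_right by lra. apply (small_lt_eps _ _ 2); auto.
    set (r := g1 t / g2 t) in *.
    assert (Hr : 0 < r) by lra.
    replace (g2 t ^ 2) with ((g1 t * g2 t) / r) by (unfold r; field; lra).
    assert (0 < g1 t * g2 t) by (apply Rmult_lt_0_compat; auto).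
    assert ((g1 t * g2 t) / r <= 2 * (g1 t * g2 t)).
    { apply (Rmult_le_reg_r r); auto. replace (g1 t * g2 t / r * r) with (g1 t * g2 t) by (field; lra). nra. }
    lra.
  - destruct Hs as (E0&E1&E2&E3&R0&R1&R2&R3&D).
    apply (smono_sol g3 (fun c => rhs33 b (g0 c) (g1 c) (g2 c) (g3 c))); auto.
    + intros c Hc; apply (D c Hc).
    + intros c Hc. destruct (Pos c ltac:(lra)) as (Q0&Q1&Q2&Q3). unfold rhs33.
      assert (0 < pB (g1 c) (g2 c)) by (apply pB_pos; auto).
      repeat apply Rmult_lt_0_compat; auto; try lra; apply pow_lt; auto.
  - intros M. set (Cq := h0^3*h3). assert (HC : 0 < Cq) by (unfold Cq; apply Rmult_lt_0_compat; [apply pow_lt|]; auto).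
    destruct (G0 (Rmin 1 (Cq / (Rabs M + 1)))) as [T [HT HT']].
    { apply Rmin_glb_lt; [lra|apply Rdiv_lt_0_compat; auto; assert (0 <= Rabs M) by apply Rabs_pos; lra]. }
    exists T. intros t Ht. specialize (HT' t Ht).
    assert (A1 : g0 t < 1) by (eapply Rlt_le_trans; [apply HT'|apply Rmin_l]).
    assert (A2 : g0 t < Cq / (Rabs M + 1)) by (eapply Rlt_le_trans; [apply HT'|apply Rmin_r]).
    destruct (Pos t ltac:(lra)) as (Q0&_&_&Q3). destruct (Cons t ltac:(lra)) as (K1&_).
    assert (g0 t ^ 3 <= g0 t) by (apply (pow_le_self _ 2); lra).
    assert (0 < g0 t ^ 3) by (apply pow_lt; auto).
    assert (HM : M <= Rabs M) by apply RRle_abs.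
    assert (Cq / g0 t ^ 3 > Rabs M + 1 - 1 / 2).
    { apply Rlt_gt. apply (Rmult_lt_reg_r (g0 t ^ 3)); auto.
      replace (Cq / g0 t ^ 3 * g0 t ^ 3) with Cq by (field; lra).
      assert (g0 t * (Rabs M + 1) < Cq).
      { apply (Rmult_lt_reg_r (/ (Rabs M + 1))). apply Rinv_0_lt_compat. assert (0 <= Rabs M) by apply Rabs_pos; lra.
        rewrite Rmult_assoc, Rinv_r, Rmult_1_r. auto. assert (0 <= Rabs M) by apply Rabs_pos; lra. }
      assert (0 <= Rabs M) by apply Rabs_pos. nra. }
    replace (g3 t) with (Cq / g0 t ^ 3) by (unfold Cq; rewrite <- K1; field; lra). lra.
Qed.

Lemma sq_inj a c : 0 < a -> 0 < c -> a ^ 2 = c ^ 2 -> a = c.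
Proof. intros Ha Hc H. assert ((a - c) * (a + c) = 0) by (replace ((a - c) * (a + c)) with (a^2 - c^2) by ring; lra). nra. Qed.
Lemma cube_inj a c : 0 < a -> 0 < c -> a ^ 3 = c ^ 3 -> a = c.
Proof. intros Ha Hc H. assert ((a - c) * (a^2 + a*c + c^2) = 0) by (replace ((a - c) * (a^2 + a*c + c^2)) with (a^3 - c^3) by ring; lra).
  apply Rmult_integral in H0. destruct H0; [lra|]. nra. Qed.
Lemma six_inj a c : 0 < a -> 0 < c -> a ^ 6 = c ^ 6 -> a = c.
Proof. intros Ha Hc H. apply cube_inj; auto. apply sq_inj; try (apply pow_lt; auto).
  rewrite <- !pow_mult. auto. Qed.

Lemma Rpower_powE E a n : 0 < E -> Rpower E a ^ n = Rpower E (a * INR n).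
Proof. intros HE. rewrite <- Rpower_pow by (unfold Rpower; apply exp_pos). apply Rpower_mult. Qed.

Lemma Rpower_pos E a : 0 < Rpower E a.
Proof. unfold Rpower; apply exp_pos. Qed.

Lemma sol_equal b h0 h1 h2 h3 g0 g1 g2 g3 : 0 < b -> 0 < h0 -> 0 < h1 -> 0 < h2 -> 0 < h3 ->
  is_global_solution b h0 h1 h2 h3 g0 g1 g2 g3 -> h1 = h2 ->
  let mu := h0 ^ 3 * h3 / (h0 * h1 * h2 * h3) in
      forall t, 0 <= t ->
        g0 t = Rpower mu (1/2) * Rpower (24 * mu * b * t + / h1 ^ 6) (- (1/6)) /\
        g1 t = Rpower (24 * mu * b * t + / h1 ^ 6) (- (1/6)) /\
        g2 t = Rpower (24 * mu * b * t + / h1 ^ 6) (- (1/6)) /\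
        g3 t = h1 ^ 3 * h3 * Rpower (24 * mu * b * t + / h1 ^ 6) (1/2).
Proof.
  intros Hb P0 P1 P2 P3 Hs H12 mu.
  assert (Pos := sol_pos _ _ _ _ _ _ _ _ _ Hb P0 P1 P2 P3 Hs).
  assert (Cons := sol_cons _ _ _ _ _ _ _ _ _ Hb P0 P1 P2 P3 Hs).
  destruct (sol_cont _ _ _ _ _ _ _ _ _ Hs) as (C0&C1&C2&C3).
  destruct Hs as (E0&E1&E2&E3&R0&R1&R2&R3&D).
  assert (Hmu : 0 < mu).
  { unfold mu. apply Rdiv_lt_0_compat. apply Rmult_lt_0_compat; [apply pow_lt|]; auto.
    repeat apply Rmult_lt_0_compat; auto. }
  assert (Heq : forall t, 0 <= t -> g1 t = g2 t).
  { intros t Ht. destruct (Cons t Ht) as (_&_&K). destruct (Pos t Ht) as (Q0&Q1&Q2&Q3).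
    assert (HK0 : Kq h1 h2 = 0) by (rewrite H12; unfold Kq; field; lra).
    rewrite HK0 in K. unfold Kq in K.
    assert (0 < (g1 t * g2 t) ^ 25) by (apply pow_lt; apply Rmult_lt_0_compat; auto).
    assert (0 < 2 * g2 t ^ 2 + g1 t * g2 t + 2 * g1 t ^ 2) by (assert (0 < g1 t * g2 t) by (apply Rmult_lt_0_compat; auto); nra).
    assert (HH : (g2 t - g1 t) ^ 4 * (2 * g2 t ^ 2 + g1 t * g2 t + 2 * g1 t ^ 2) ^ 3 = 0).
    { apply (Rmult_eq_reg_r (/ (g1 t * g2 t) ^ 25)); [|apply Rinv_neq_0_compat; lra].
      rewrite Rmult_0_l. exact K. }
    apply Rmult_integral in HH. destruct HH as [HH|HH].
    - destruct (Req_dec (g2 t - g1 t) 0) as [|Hn]; [lra|]. exfalso; apply (pow_nonzero _ 4 Hn); auto.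
    - exfalso. apply (pow_nonzero (2 * g2 t ^ 2 + g1 t * g2 t + 2 * g1 t ^ 2) 3); [lra|auto]. }
  assert (Hg0 : forall t, 0 <= t -> g0 t ^ 2 = mu * g1 t ^ 2).
  { intros t Ht. destruct (Cons t Ht) as (K1&K2&_). destruct (Pos t Ht) as (Q0&Q1&Q2&Q3).
    unfold mu. rewrite <- K1, <- K2. rewrite <- (Heq t Ht). field. repeat split; lra. }
  assert (HX : forall t, 0 <= t -> 1 / g1 t ^ 6 - 24 * mu * b * t = 1 / g1 0 ^ 6 - 24 * mu * b * 0).
  { apply (const_sol (fun t => 1 / g1 t ^ 6 - 24 * mu * b * t) (fun _ => 0)).
    - intros c Hc. destruct (D c Hc) as (_&H1&_). destruct (Pos c ltac:(lra)) as (Q0&Q1&_).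
      assert (Hne : g1 c ^ 6 <> 0) by (apply pow_nonzero; lra).
      assert (HH := derivable_pt_lim_div (fun _ => 1) (fun t => g1 t ^ 6) c 0 _
         (derivable_pt_lim_const 1 c) (dpl_powf _ _ _ 6 H1) Hne).
      eapply dpl_eq.
      + apply derivable_pt_lim_minus; [|apply derivable_pt_lim_scal; apply derivable_pt_lim_id].
        exact HH.
      + unfold rhs11, Rsqr. rewrite <- (Heq c) by lra.
        replace (g0 c ^ 2) with (mu * g1 c ^ 2) by (symmetry; apply Hg0; lra).
        unfold qB. simpl. field. lra.
    - apply (rc_of_cont (fun t => 1 / ext0 g1 t ^ 6 - 24 * mu * b * t)).
      + apply continuity_pt_minus.
        * apply continuity_pt_div; [apply continuity_pt_const; intros ??; auto|apply cont_powf; auto|].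
          unfold ext0; rewrite Rmax_right by lra. rewrite E1; apply pow_nonzero; lra.
        * apply continuity_pt_scal. apply derivable_continuous_pt; apply derivable_pt_id.
      + intros s Hs; unfold ext0; rewrite Rmax_left by lra; auto.
    - auto. }
  intros t Ht.
  destruct (Pos t Ht) as (Q0&Q1&Q2&Q3).
  set (E := 24 * mu * b * t + / h1 ^ 6).
  assert (HE : E = / g1 t ^ 6).
  { unfold E. specialize (HX t Ht). rewrite E1 in HX. unfold Rdiv in HX. rewrite !Rmult_1_l in HX. lra. }
  assert (HE0 : 0 < E) by (rewrite HE; apply Rinv_0_lt_compat, pow_lt; auto).
  assert (HR1 : Rpower E (- (1/6)) = g1 t).
  { apply six_inj; [apply Rpower_pos|auto|]. rewrite Rpower_powE by auto.
    replace (- (1/6) * INR 6) with (Ropp 1) by (simpl; field).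
    rewrite Rpower_Ropp, Rpower_1 by auto. rewrite HE. field. lra. }
  assert (HR2 : Rpower E (1/2) = / g1 t ^ 3).
  { apply sq_inj; [apply Rpower_pos| apply Rinv_0_lt_compat, pow_lt; auto |]. rewrite Rpower_powE by auto.
    replace (1/2 * INR 2) with 1 by (simpl; field). rewrite Rpower_1 by auto. rewrite HE. field. lra. }
  assert (Hs : Rpower mu (1/2) ^ 2 = mu).
  { rewrite Rpower_powE by auto. replace (1/2 * INR 2) with 1 by (simpl; field). apply Rpower_1; auto. }
  assert (HG0 : g0 t = Rpower mu (1/2) * g1 t).
  { apply sq_inj; auto. apply Rmult_lt_0_compat; auto; apply Rpower_pos.
    rewrite Hg0 by auto. rewrite Rpow_mult_distr, Hs. auto. }
  rewrite HR1, HR2. split; [auto|split; [auto|split; [symmetry; apply Heq; auto|]]].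
  destruct (Cons t Ht) as (K1&_).
  assert (Hm2 : Rpower mu (1/2) = h0 / h1).
  { apply sq_inj; [apply Rpower_pos|apply Rdiv_lt_0_compat; auto|]. rewrite Hs. unfold mu. rewrite <- H12. field. lra. }
  apply (Rmult_eq_reg_l (g0 t ^ 3)); [|apply pow_nonzero; lra].
  rewrite K1. rewrite HG0, Hm2. field. lra.
Qed.

Lemma qB_pos x y : 0 < x -> x < y -> 0 < qB y x.
Proof. intros Hx Hxy. unfold qB.
  assert (x^2 < y^2) by nra. assert (x^4 < y^4) by nra.
  assert (0 < x*y) by nra. assert (0 < x*y*(y^2 - x^2)) by (apply Rmult_lt_0_compat; lra). nra. Qed.

Lemma qB_diff x y : 0 < x -> x < y -> 0 < qB y x - qB x y.
Proof. intros Hx Hxy.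
  replace (qB y x - qB x y) with (4 * (y - x) * (2*y^3 + 3*y^2*x + 3*y*x^2 + 2*x^3)) by (unfold qB; ring).
  assert (0 < 2*y^3 + 3*y^2*x + 3*y*x^2 + 2*x^3).
  { assert (0 < y) by lra. assert (0 < y^3) by (apply pow_lt; auto). assert (0 < x^3) by (apply pow_lt; auto).
    assert (0 < y^2*x) by (apply Rmult_lt_0_compat; [apply pow_lt|]; auto).
    assert (0 < y*x^2) by (apply Rmult_lt_0_compat; [|apply pow_lt]; auto). lra. }
  apply Rmult_lt_0_compat; lra. Qed.

Lemma sol_less b h0 h1 h2 h3 g0 g1 g2 g3 : 0 < b -> 0 < h0 -> 0 < h1 -> 0 < h2 -> 0 < h3 ->
  is_global_solution b h0 h1 h2 h3 g0 g1 g2 g3 -> h1 < h2 ->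
      let eta := (h1 * h2) ^ 25 /
                 ((h2 - h1) ^ 4 * (2 * h2 ^ 2 + h1 * h2 + 2 * h1 ^ 2) ^ 3) in
      (forall t, 0 <= t -> g1 t < g2 t) /\
      strict_decr_on_nonneg g2 /\
      strict_incr_on_nonneg (fun t => g1 t / g2 t) /\
      (forall t, 0 <= t ->
        (g1 t * g2 t) ^ 25 =
        eta * (g2 t - g1 t) ^ 4 * (2 * g2 t ^ 2 + g1 t * g2 t + 2 * g1 t ^ 2) ^ 3).
Proof.
  intros Hb P0 P1 P2 P3 Hs H12 eta.
  assert (Pos := sol_pos _ _ _ _ _ _ _ _ _ Hb P0 P1 P2 P3 Hs).
  assert (Cons := sol_cons _ _ _ _ _ _ _ _ _ Hb P0 P1 P2 P3 Hs).
  destruct (sol_cont _ _ _ _ _ _ _ _ _ Hs) as (C0&C1&C2&C3).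
  destruct Hs as (E0&E1&E2&E3&R0&R1&R2&R3&D).
  assert (HS0 : 0 < 2 * h2 ^ 2 + h1 * h2 + 2 * h1 ^ 2) by nra.
  assert (HD0 : 0 < (h2 - h1) ^ 4) by (apply pow_lt; lra).
  assert (HW0 : 0 < (h1 * h2) ^ 25) by (apply pow_lt; nra).
  assert (HS3 : 0 < (2 * h2 ^ 2 + h1 * h2 + 2 * h1 ^ 2) ^ 3) by (apply pow_lt; auto).
  assert (HK : 0 < Kq h1 h2).
  { unfold Kq. apply Rmult_lt_0_compat; [apply Rmult_lt_0_compat; auto|]. apply Rinv_0_lt_compat; auto. }
  assert (Lt : forall t, 0 <= t -> g1 t < g2 t).
  { intros t Ht. cut (0 < (fun t => g2 t - g1 t) t); [simpl; lra|].
    apply sign_ivt; auto.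
    - intros c. unfold ext0. apply (continuity_pt_minus (ext0 g2) (ext0 g1)); auto.
    - rewrite E1, E2; lra.
    - intros s Hs' Heq. destruct (Cons s Hs') as (_&_&K). unfold Kq in K at 1.
      replace (g2 s - g1 s) with 0 in K by lra. rewrite pow_i in K by lia.
      unfold Rdiv in K. rewrite !Rmult_0_l in K. lra. }
  split; [exact Lt|split; [|split]].
  - intros s t Hs' Hst.
    assert (H := smono_sol (fun t => - g2 t) (fun c => - rhs22 b (g0 c) (g1 c) (g2 c) (g3 c))).
    cut ((fun t => - g2 t) s < (fun t => - g2 t) t); [simpl; lra|]. apply H; auto.
    + intros c Hc. apply derivable_pt_lim_opp. apply (D c Hc).
    + apply rc_opp; auto.
    + intros c Hc. destruct (Pos c ltac:(lra)) as (Q0&Q1&Q2&Q3). unfold rhs22.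
      assert (0 < qB (g2 c) (g1 c)) by (apply qB_pos; auto; apply Lt; lra).
      assert (0 < g0 c ^ 2) by (apply pow_lt; auto).
      assert (0 < b * qB (g2 c) (g1 c) * g0 c ^ 2 * g2 c) by (repeat apply Rmult_lt_0_compat; auto; lra).
      lra.
  - apply (smono_sol _ (fun c => (rhs11 b (g0 c) (g1 c) (g2 c) (g3 c) * g2 c - rhs22 b (g0 c) (g1 c) (g2 c) (g3 c) * g1 c) / Rsqr (g2 c))).
    + intros c Hc. destruct (D c Hc) as (_&H1&H2&_). destruct (Pos c ltac:(lra)) as (Q0&Q1&Q2&Q3).
      apply (derivable_pt_lim_div g1 g2); auto; lra.
    + apply (rc_of_cont (fun t => ext0 g1 t / ext0 g2 t)).
      * apply continuity_pt_div; auto. unfold ext0; rewrite Rmax_right by lra. lra.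
      * intros s Hs'; unfold ext0; rewrite Rmax_left by lra; auto.
    + intros c Hc. destruct (Pos c ltac:(lra)) as (Q0&Q1&Q2&Q3). unfold rhs11, rhs22.
      assert (Hq := qB_diff _ _ Q1 (Lt c ltac:(lra))).
      apply Rdiv_lt_0_compat; [|unfold Rsqr; nra].
      replace (- b * qB (g1 c) (g2 c) * g0 c ^ 2 * g1 c * g2 c - - b * qB (g2 c) (g1 c) * g0 c ^ 2 * g2 c * g1 c)
        with (b * g0 c ^ 2 * (g1 c * g2 c) * (qB (g2 c) (g1 c) - qB (g1 c) (g2 c))) by ring.
      repeat apply Rmult_lt_0_compat; auto; try lra; apply pow_lt; auto.
  - intros t Ht. destruct (Cons t Ht) as (_&_&K). destruct (Pos t Ht) as (Q0&Q1&Q2&Q3).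
    unfold Kq in K. unfold eta.
    assert (0 < (g1 t * g2 t) ^ 25) by (apply pow_lt; nra).
    apply (Rmult_eq_reg_r (/ (g1 t * g2 t) ^ 25)); [|apply Rinv_neq_0_compat; lra].
    rewrite Rinv_r by lra.
    replace (1) with ((h1 * h2) ^ 25 / ((h2 - h1) ^ 4 * (2 * h2 ^ 2 + h1 * h2 + 2 * h1 ^ 2) ^ 3) * ((h2 - h1) ^ 4 * (2 * h2 ^ 2 + h1 * h2 + 2 * h1 ^ 2) ^ 3 / (h1 * h2) ^ 25)) by (field; lra).
    rewrite <- K. field. lra.
Qed.

Definition Pr (x : R) := 2*x^3 + 3*x^2 + 3*x + 2.
Definition G0f (mu : R) (r Y : R -> R) := fun t => sqrt (mu * r t) * Y t.
Definition G1f (r Y : R -> R) := fun t => r t * Y t.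
Definition G3f (mu C : R) (r Y : R -> R) := fun t => C / (sqrt (mu * r t) * Y t) ^ 3.

Lemma GV b mu C r Y t : 0 < mu -> 0 < r t -> 0 < Y t ->
  derivable_pt_lim r t (4 * b * mu * r t ^ 2 * Y t ^ 6 * (1 - r t) * Pr (r t)) ->
  derivable_pt_lim Y t (- b * mu * r t * Y t ^ 7 * qB 1 (r t)) ->
  let g0 := G0f mu r Y in let g1 := G1f r Y in let g3 := G3f mu C r Y in
    derivable_pt_lim g0 t (rhs00 b (g0 t) (g1 t) (Y t) (g3 t)) /\
    derivable_pt_lim g1 t (rhs11 b (g0 t) (g1 t) (Y t) (g3 t)) /\
    derivable_pt_lim Y t (rhs22 b (g0 t) (g1 t) (Y t) (g3 t)) /\
    derivable_pt_lim g3 t (rhs33 b (g0 t) (g1 t) (Y t) (g3 t)).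
Proof.
  intros Hmu Hr HY Dr DY g0 g1 g3.
  set (s := sqrt (mu * r t)).
  assert (Hmr : 0 < mu * r t) by (apply Rmult_lt_0_compat; auto).
  assert (Hs : 0 < s) by (apply sqrt_lt_R0; auto).
  assert (Hs2 : s * s = mu * r t) by (apply sqrt_sqrt; lra).
  assert (Hmu' : mu = s * s / r t) by (rewrite Hs2; field; lra).
  assert (Ds : derivable_pt_lim (fun t => sqrt (mu * r t)) t (/ (2 * s) * (mu * (4 * b * mu * r t ^ 2 * Y t ^ 6 * (1 - r t) * Pr (r t))))).
  { apply (derivable_pt_lim_comp (fun t => mu * r t) sqrt).
    - apply derivable_pt_lim_scal; auto.
    - apply derivable_pt_lim_sqrt; auto. }
  assert (D0 : derivable_pt_lim g0 t (rhs00 b (g0 t) (g1 t) (Y t) (g3 t))).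
  { unfold g0, G0f. eapply dpl_eq; [apply derivable_pt_lim_mult; [apply Ds|apply DY]|].
    unfold g1, G1f, rhs00, pB, qB, Pr. fold s.
    clearbody s; rewrite Hmu'. field. split; lra. }
  split; [exact D0|split; [|split]].
  - unfold g1, G1f. eapply dpl_eq; [apply derivable_pt_lim_mult; [apply Dr|apply DY]|].
    unfold g0, G0f, rhs11, qB, Pr. fold s.
    clearbody s; rewrite Hmu'. field. lra.
  - eapply dpl_eq; [apply DY|].
    unfold g0, G0f, g1, G1f, rhs22, qB. fold s.
    clearbody s; rewrite Hmu'. field. lra.
  - assert (Hg0 : g0 t <> 0) by (unfold g0, G0f; fold s; apply Rgt_not_eq, Rmult_lt_0_compat; auto).
    assert (Hne : g0 t ^ 3 <> 0) by (apply pow_nonzero; auto).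
    unfold g3, G3f. fold (G0f mu r Y). fold g0.
    eapply dpl_eq; [apply (derivable_pt_lim_div (fun _ => C) (fun t => g0 t ^ 3)); [apply derivable_pt_lim_const|apply dpl_powf; apply D0|auto]|].
    unfold rhs00, rhs33, Rsqr. change (sqrt (mu * r t) * Y t) with (g0 t). clearbody g0 g1 g3. simpl. field. auto.
Qed.

Lemma build_sol b mu C r Y h0 h1 h2 h3 : 0 < mu -> 0 < h0 ->
  (forall t, 0 < t -> 0 < r t /\ 0 < Y t /\
    derivable_pt_lim r t (4 * b * mu * r t ^ 2 * Y t ^ 6 * (1 - r t) * Pr (r t)) /\
    derivable_pt_lim Y t (- b * mu * r t * Y t ^ 7 * qB 1 (r t))) ->
  continuity_pt r 0 -> continuity_pt Y 0 -> 0 < r 0 -> 0 < Y 0 ->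
  mu * r 0 * Y 0 ^ 2 = h0 ^ 2 -> r 0 * Y 0 = h1 -> Y 0 = h2 -> C = h0 ^ 3 * h3 ->
  is_global_solution b h0 h1 h2 h3 (G0f mu r Y) (G1f r Y) Y (G3f mu C r Y).
Proof.
  intros Hmu H0 HD Cr CY Hr0 HY0 I0 I1 I2 I3.
  assert (Hmr : 0 < mu * r 0) by (apply Rmult_lt_0_compat; auto).
  assert (Cs : continuity_pt (fun t => sqrt (mu * r t)) 0).
  { apply (continuity_pt_comp (fun t => mu * r t) sqrt).
    - apply continuity_pt_scal; auto.
    - apply continuity_pt_sqrt; lra. }
  assert (Hg0 : G0f mu r Y 0 = h0).
  { unfold G0f. apply sq_inj; auto. apply Rmult_lt_0_compat; auto. apply sqrt_lt_R0; auto.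
    rewrite <- I0. rewrite Rpow_mult_distr. rewrite <- Rsqr_pow2, Rsqr_sqrt by lra. ring. }
  assert (C0 : continuity_pt (G0f mu r Y) 0) by (apply continuity_pt_mult; auto).
  split; [exact Hg0|]. split; [unfold G1f; auto|]. split; [auto|]. split.
  { unfold G3f. fold (G0f mu r Y 0). rewrite Hg0, I3. field. lra. }
  split; [apply (rc_of_cont (G0f mu r Y)); auto|].
  split; [apply (rc_of_cont (G1f r Y)); auto; apply continuity_pt_mult; auto|].
  split; [apply (rc_of_cont Y); auto|].
  split; [apply (rc_of_cont (G3f mu C r Y)); auto|].
  { unfold G3f. apply continuity_pt_div.
    - apply continuity_pt_const; intros ??; auto.
    - apply cont_powf. exact C0.
    - fold (G0f mu r Y 0). rewrite Hg0. apply pow_nonzero; lra. }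
  intros t Ht. destruct (HD t Ht) as (Q1&Q2&Dr&DY).
  apply (GV b mu C r Y t); auto.
Qed.

Lemma exist_equal b h0 h1 h3 : 0 < b -> 0 < h0 -> 0 < h1 -> 0 < h3 ->
  exists g0 g1 g2 g3 : R -> R, is_global_solution b h0 h1 h1 h3 g0 g1 g2 g3.
Proof.
  intros Hb P0 P1 P3.
  set (mu := h0 ^ 2 / h1 ^ 2).
  assert (Hmu : 0 < mu) by (unfold mu; apply Rdiv_lt_0_compat; apply pow_lt; auto).
  set (E := fun t => 24 * b * mu * t + / h1 ^ 6).
  set (Y := fun t => Rpower (E t) (- (1/6))).
  assert (HE : forall t, 0 <= t -> 0 < E t).
  { intros t Ht. unfold E. assert (0 < / h1 ^ 6) by (apply Rinv_0_lt_compat, pow_lt; auto).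
    assert (0 <= b * mu * t) by (apply Rmult_le_pos; [apply Rmult_le_pos|]; lra). lra. }
  assert (DY : forall t, 0 <= t -> derivable_pt_lim Y t (- b * mu * 1 * Y t ^ 7 * qB 1 1)).
  { intros t Ht. assert (Et := HE t Ht).
    assert (HY6 : Y t ^ 6 = / E t).
    { unfold Y. rewrite Rpower_powE by auto. replace (- (1/6) * INR 6) with (Ropp 1) by (simpl; field).
      rewrite Rpower_Ropp, Rpower_1 by auto. auto. }
    unfold Y, Rpower.
    eapply dpl_eq.
    - apply (derivable_pt_lim_comp (fun t => - (1/6) * ln (E t)) exp); [|apply derivable_pt_lim_exp].
      apply derivable_pt_lim_scal. apply (derivable_pt_lim_comp E ln); [|apply derivable_pt_lim_ln; auto].
      unfold E. eapply dpl_eq; [apply derivable_pt_lim_plus; [apply derivable_pt_lim_scal; apply derivable_pt_lim_id|apply derivable_pt_lim_const]|reflexivity].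
    - fold (Rpower (E t) (- (1/6))). fold (Y t).
      replace (Y t ^ 7) with (Y t * Y t ^ 6) by ring. rewrite HY6. unfold qB. field. lra. }
  exists (G0f mu (fun _ => 1) Y), (G1f (fun _ => 1) Y), Y, (G3f mu (h0^3*h3) (fun _ => 1) Y).
  apply build_sol; auto; try lra.
  - intros t Ht. split; [lra|split; [unfold Y; apply Rpower_pos|split]].
    + eapply dpl_eq; [apply derivable_pt_lim_const|ring].
    + apply DY; lra.
  - apply continuity_pt_const; intros ??; auto.
  - eapply dpl_cont; apply DY; lra.
  - unfold Y; apply Rpower_pos.
  - assert (HY0 : Y 0 = h1).
    { unfold Y, E. apply six_inj; [apply Rpower_pos|auto|].
      rewrite Rpower_powE by (rewrite Rmult_0_r, Rplus_0_l; apply Rinv_0_lt_compat, pow_lt; auto).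
      replace (- (1/6) * INR 6) with (Ropp 1) by (simpl; field).
      rewrite Rpower_Ropp, Rpower_1 by (rewrite Rmult_0_r, Rplus_0_l; apply Rinv_0_lt_compat, pow_lt; auto).
      rewrite Rmult_0_r, Rplus_0_l. field. lra. }
    rewrite HY0. unfold mu. field. lra.
  - assert (HY0 : Y 0 = h1).
    { unfold Y, E. apply six_inj; [apply Rpower_pos|auto|].
      rewrite Rpower_powE by (rewrite Rmult_0_r, Rplus_0_l; apply Rinv_0_lt_compat, pow_lt; auto).
      replace (- (1/6) * INR 6) with (Ropp 1) by (simpl; field).
      rewrite Rpower_Ropp, Rpower_1 by (rewrite Rmult_0_r, Rplus_0_l; apply Rinv_0_lt_compat, pow_lt; auto).
      rewrite Rmult_0_r, Rplus_0_l. field. lra. }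
    rewrite HY0; ring.
  - unfold Y, E. apply six_inj; [apply Rpower_pos|auto|].
      rewrite Rpower_powE by (rewrite Rmult_0_r, Rplus_0_l; apply Rinv_0_lt_compat, pow_lt; auto).
      replace (- (1/6) * INR 6) with (Ropp 1) by (simpl; field).
      rewrite Rpower_Ropp, Rpower_1 by (rewrite Rmult_0_r, Rplus_0_l; apply Rinv_0_lt_compat, pow_lt; auto).
      rewrite Rmult_0_r, Rplus_0_l. field. lra.
Qed.

Definition Sf x := 2 + x + 2*x^2.
Definition Lf eta x := (ln eta + 4*ln(1-x) + 3*ln(Sf x) - 25*ln x)/40.
Definition Psi eta x := exp (Lf eta x).
Definition Ff b mu eta x := 4*b*mu*x^2*Psi eta x^6*(1-x)*Pr x.
Definition ff b mu eta x := / Ff b mu eta x.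
Definition dLf x := (-4/(1-x) + 3*(1+4*x)/Sf x - 25/x)/40.

Lemma Sf_pos x : 0 < x -> 0 < Sf x.
Proof. intros. unfold Sf. nra. Qed.

Lemma Psi_der eta x : 0 < eta -> 0 < x < 1 -> derivable_pt_lim (Psi eta) x (Psi eta x * dLf x).
Proof.
  intros He Hx. apply is_derive_Reals.
  change (is_derive (fun x => exp ((ln eta + 4*ln(1-x) + 3*ln(2 + x + 2*x^2) - 25*ln x)/40)) x (Psi eta x * dLf x)).
  auto_derive.
  - repeat split; try lra. nra.
  - replace (1 + - x) with (1 - x) by ring. replace (2 + x + 2 * (x * (x * 1))) with (Sf x) by (unfold Sf; ring).
    match goal with |- context [exp ?a] => replace a with (Lf eta x) by (unfold Lf; field) end.
    fold (Psi eta x). unfold dLf, Sf. field. repeat split; try lra. nra.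
Qed.

Lemma Psi_pos eta x : 0 < Psi eta x.
Proof. apply exp_pos. Qed.

Lemma Ff_pos b mu eta x : 0 < b -> 0 < mu -> 0 < x < 1 -> 0 < Ff b mu eta x.
Proof.
  intros Hb Hm Hx. unfold Ff, Pr.
  assert (0 < Psi eta x ^ 6) by (apply pow_lt, Psi_pos).
  assert (0 < 2*x^3 + 3*x^2 + 3*x + 2) by (assert (0 < x^3) by (apply pow_lt; lra); nra).
  assert (0 < x^2) by (apply pow_lt; lra).
  repeat apply Rmult_lt_0_compat; try lra; apply Psi_pos.
Qed.

Lemma ff_cont b mu eta x : 0 < b -> 0 < mu -> 0 < eta -> 0 < x < 1 -> continuous (ff b mu eta) x.
Proof.
  intros Hb Hm He Hx. apply (@ex_derive_continuous R_AbsRing R_NormedModule (ff b mu eta) x).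
  unfold ff, Ff, Psi, Lf, Sf, Pr. auto_derive. repeat split; try lra; try nra.
  apply Rgt_not_eq. assert (0 < x*(x*(x*1))) by (simpl; assert (0 < x*x) by nra; nra).
  repeat apply Rmult_lt_0_compat; try lra; try apply exp_pos; nra.
Qed.


Lemma T_der (f : R -> R) r0 x : 0 < r0 < 1 -> 0 < x < 1 -> (forall z, 0 < z < 1 -> continuous f z) ->
  derivable_pt_lim (fun y => RInt f r0 y) x (f x).
Proof.
  intros Hr Hx Hc. apply is_derive_Reals. apply (is_derive_RInt f _ r0).
  - apply (locally_interval _ x 0 1); simpl; try lra.
    intros y Hy0 Hy1. apply (@RInt_correct R_CompleteNormedModule). apply (@ex_RInt_continuous R_CompleteNormedModule).
    intros z Hz. apply Hc. split.
    + eapply Rlt_le_trans; [|apply Hz]. apply Rmin_glb_lt; lra.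
    + eapply Rle_lt_trans; [apply Hz|]. apply Rmax_lub_lt; lra.
  - apply Hc; auto.
Qed.

Lemma exp_le_mono x y : x <= y -> exp x <= exp y.
Proof. intros H. destruct (Rle_lt_or_eq_dec _ _ H) as [Hl|Hl]; [left; apply exp_increasing; auto|rewrite Hl; lra]. Qed.

Lemma inverse_ode (f : R -> R) r0 c : 0 < r0 < 1 -> 0 < c ->
  (forall z, 0 < z < 1 -> continuous f z) -> (forall z, 0 < z < 1 -> 0 < f z) ->
  (forall z, r0 <= z < 1 -> / (c * (1 - z)) <= f z) ->
  exists r : R -> R, (forall t, r0 <= r t < 1) /\ r 0 = r0 /\ continuity_pt r 0 /\
    forall t, 0 < t -> derivable_pt_lim r t (/ f (r t)).
Proof.
  intros Hr00 Hc Hcont Hpos Hlow.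
  set (T := fun y => RInt f r0 y).
  assert (TD : forall x, 0 < x < 1 -> derivable_pt_lim T x (f x)) by (intros; apply T_der; auto).
  assert (T0 : T r0 = 0) by (unfold T; rewrite RInt_point; reflexivity).
  assert (Tinc : forall x y, r0 <= x -> x < y -> y < 1 -> T x < T y).
  { intros x y Hx Hxy Hy. apply (smono_closed T f); auto.
    - intros z Hz; apply TD; lra.
    - intros z Hz; apply Hpos; lra. }
  assert (Tlow : forall y, r0 <= y < 1 -> (ln (1 - r0) - ln (1 - y)) / c <= T y).
  { intros y Hy.
    assert (H := mono_closed (fun z => T z + ln (1 - z) / c) (fun z => f z + (/ (1 - z) * (0 - 1)) / c) r0 y (proj1 Hy)).
    cbv beta in H. rewrite T0 in H.
    cut (0 + ln (1 - r0) / c <= T y + ln (1 - y) / c); [unfold Rdiv; lra|]. apply H.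
    - intros z Hz. apply derivable_pt_lim_plus; [apply TD; lra|].
      apply derivable_pt_lim_div_scal.
      apply (derivable_pt_lim_comp (fun z => 1 - z) ln).
      + apply derivable_pt_lim_minus; [apply derivable_pt_lim_const|apply derivable_pt_lim_id].
      + apply derivable_pt_lim_ln; lra.
    - intros z Hz. assert (Hl := Hlow z ltac:(lra)).
      replace (/ (c * (1 - z))) with (/ (1 - z) / c) in Hl by (field; lra). lra. }
  assert (Tsurj : forall t, exists y, r0 <= y < 1 /\ T y = Rmax t 0).
  { intros t. set (s := Rmax t 0). assert (Hs : 0 <= s) by apply Rmax_r.
    destruct (Rle_lt_or_eq_dec _ _ Hs) as [Hs0|Hs0]; [|exists r0; split; [lra|rewrite T0; auto]].
    set (y1 := 1 - (1 - r0) * exp (- (c * s) - 1)).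
    assert (He : 0 < exp (- (c * s) - 1) < 1).
    { split; [apply exp_pos|]. apply Rlt_le_trans with (exp 0); [|rewrite exp_0; lra]. apply exp_increasing.
      assert (0 < c * s) by (apply Rmult_lt_0_compat; auto). lra. }
    assert (Hy1 : r0 < y1 < 1) by (unfold y1; split; nra).
    assert (HT1 : s < T y1).
    { eapply Rlt_le_trans; [|apply Tlow; lra].
      replace (1 - y1) with ((1 - r0) * exp (- (c * s) - 1)) by (unfold y1; ring).
      rewrite ln_mult, ln_exp by lra.
      apply (Rmult_lt_reg_r c); auto. unfold Rdiv. rewrite Rmult_assoc, Rinv_l, Rmult_1_r by lra. lra. }
    destruct (IVT_interv (fun y => T y - s) r0 y1) as [y [Hy Hy']].
    + intros a Ha. apply continuity_pt_minus; [|apply continuity_pt_const; intros ??; auto].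
      eapply dpl_cont; apply TD; lra.
    + lra.
    + rewrite T0; lra.
    + lra.
    + exists y. split; [lra|]. simpl in Hy'. fold s; lra. }
  set (r := fun t => proj1_sig (ClassicalEpsilon.constructive_indefinite_description _ (Tsurj t))).
  assert (Hr : forall t, (r0 <= r t < 1) /\ T (r t) = Rmax t 0).
  { intros t. unfold r. destruct (ClassicalEpsilon.constructive_indefinite_description _ (Tsurj t)) as [y Hy]. simpl. auto. }
  assert (Tuniq : forall x y, r0 <= x < 1 -> r0 <= y < 1 -> T x = T y -> x = y).
  { intros x y Hx Hy Hxy. destruct (Rtotal_order x y) as [H|[H|H]]; auto.
    - assert (T x < T y) by (apply Tinc; lra). lra.
    - assert (T y < T x) by (apply Tinc; lra). lra. }
  assert (Tmono : forall x y, r0 <= x < 1 -> r0 <= y < 1 -> T x <= T y -> x <= y).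
  { intros x y Hx Hy Hxy. destruct (Rle_or_lt x y) as [|H]; auto.
    assert (T y < T x) by (apply Tinc; lra). lra. }
  assert (Hr0 : r 0 = r0).
  { apply Tuniq; [apply Hr|lra|]. rewrite (proj2 (Hr 0)), T0. apply Rmax_right; lra. }
  assert (Hrt : forall t, 0 <= t -> T (r t) = t) by (intros t Ht; rewrite (proj2 (Hr t)); apply Rmax_left; lra).
  exists r. split; [intros t; apply Hr|]. split; [auto|]. split.
  - intros eps He. set (ye := Rmin (r0 + eps/2) ((r0+1)/2)).
    assert (Hye : r0 < ye < 1) by (unfold ye; split; [apply Rmin_glb_lt; lra|eapply Rle_lt_trans; [apply Rmin_r|lra]]).
    assert (Hye2 : ye <= r0 + eps/2) by apply Rmin_l.
    assert (Hd : 0 < T ye) by (rewrite <- T0; apply Tinc; lra).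
    exists (T ye). split; [lra|]. intros x [_ Hx]. simpl in *. unfold R_dist in *.
    rewrite Rminus_0_r in Hx. rewrite Hr0.
    destruct (Rle_or_lt x 0) as [Hx0|Hx0].
    + replace (r x) with r0. rewrite Rminus_diag, Rabs_R0; lra.
      apply Tuniq; [lra|apply Hr|]. rewrite (proj2 (Hr x)), T0. rewrite Rmax_right; lra.
    + assert (r x <= ye).
      { apply Tmono; [apply Hr|lra|]. rewrite Hrt by lra. apply Rabs_def2 in Hx. lra. }
      assert (r0 <= r x) by apply Hr. rewrite Rabs_right; lra.
  - intros t Ht.
    assert (Hu : r0 < r (t+1) < 1).
    { split; [|apply Hr]. destruct (proj1 (Hr (t+1))) as [H1 _].
      destruct (Rle_lt_or_eq_dec _ _ H1) as [|He]; auto. exfalso.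
      assert (T (r (t+1)) = t + 1) by (apply Hrt; lra). rewrite <- He, T0 in H. lra. }
    assert (Hrange : forall x, 0 <= x <= t + 1 -> r0 <= r x <= r (t+1)).
    { intros x Hx. split; [apply Hr|]. apply Tmono; [apply Hr|apply Hr|]. rewrite !Hrt; lra. }
    assert (Cr : continuity_pt r t).
    { apply (continuity_pt_recip_interv T r r0 (r (t+1))); try lra.
      - intros x y Hx Hxy Hy. apply Tinc; lra.
      - intros x Hx1 Hx2. rewrite T0 in Hx1. unfold comp, id. apply Hrt; lra.
      - intros x Hx1 Hx2. rewrite T0 in Hx1. rewrite Hrt in Hx2 by lra. apply Hrange; lra.
      - intros a Ha. eapply dpl_cont; apply TD; lra.
      - rewrite T0, Hrt by lra. lra. }
    assert (Prf : forall a, r 0 <= a <= r (t+1) -> derivable_pt T a).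
    { intros a Ha. exists (f a). apply TD. rewrite Hr0 in Ha. lra. }
    assert (Hinc : r 0 <= r t <= r (t+1)) by (rewrite Hr0; apply Hrange; lra).
    assert (HH := derivable_pt_lim_recip_interv T r 0 (t+1) t
      (fun a Ha => exist _ (f a) (TD a ltac:(rewrite Hr0 in Ha; lra))) Cr ltac:(lra) ltac:(lra) Hinc).
    simpl in HH. eapply dpl_eq; [apply HH|unfold Rdiv; ring].
    + intros x Hx. unfold comp, id. apply Hrt; lra.
    + assert (0 < f (r t)) by (apply Hpos; split; [apply Rlt_le_trans with r0; [lra|apply Hr]|apply Hr]). lra.
Qed.

Lemma exist_less b h0 h1 h2 h3 : 0 < b -> 0 < h0 -> 0 < h1 -> 0 < h2 -> 0 < h3 -> h1 < h2 ->
  exists g0 g1 g2 g3 : R -> R, is_global_solution b h0 h1 h2 h3 g0 g1 g2 g3.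
Proof.
  intros Hb P0 P1 P2 P3 H12.
  set (r0 := h1 / h2).
  assert (Hr0 : 0 < r0 < 1).
  { unfold r0. split; [apply Rdiv_lt_0_compat; auto|]. apply (Rmult_lt_reg_r h2); auto.
    unfold Rdiv; rewrite Rmult_assoc, Rinv_l; lra. }
  assert (HS0 := Sf_pos r0 ltac:(lra)).
  set (eta := h2^40 * r0^25 / ((1-r0)^4 * Sf r0^3)).
  assert (Heta : 0 < eta).
  { unfold eta. apply Rdiv_lt_0_compat; [apply Rmult_lt_0_compat; apply pow_lt; lra|].
    apply Rmult_lt_0_compat; apply pow_lt; lra. }
  set (mu := h0^2 / (h1 * h2)).
  assert (Hmu : 0 < mu) by (unfold mu; apply Rdiv_lt_0_compat; [apply pow_lt; auto|apply Rmult_lt_0_compat; auto]).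
  set (Lmax := (ln eta + 3 * ln 5 - 25 * ln r0) / 40).
  set (B := exp Lmax ^ 6).
  assert (HB : 0 < B) by (apply pow_lt, exp_pos).
  set (c := 40 * b * mu * B).
  assert (Hc : 0 < c) by (unfold c; apply Rmult_lt_0_compat; [apply Rmult_lt_0_compat; [lra|auto]|auto]).
  assert (Fbound : forall z, r0 <= z < 1 -> Ff b mu eta z <= c * (1 - z)).
  { intros z Hz.
    assert (Hz0 : 0 < z) by lra.
    assert (HL : Lf eta z <= Lmax).
    { unfold Lf, Lmax.
      assert (ln (1 - z) <= 0) by (rewrite <- ln_1; apply ln_le; lra).
      assert (ln (Sf z) <= ln 5) by (apply ln_le; [apply Sf_pos; auto|unfold Sf; nra]).
      assert (ln r0 <= ln z) by (apply ln_le; lra). lra. }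
    assert (HP : Psi eta z ^ 6 <= B).
    { unfold B. apply pow_incr. split; [left; apply Psi_pos|]. apply exp_le_mono; auto. }
    assert (HPr : Pr z <= 10) by (unfold Pr; assert (z^3 <= z) by (apply (pow_le_self z 2); lra) ; nra).
    assert (HPr0 : 0 <= Pr z) by (unfold Pr; assert (0 < z^3) by (apply pow_lt; lra); nra).
    assert (Hz2 : z^2 <= 1) by (assert (z^2 <= z) by (apply (pow_le_self z 1); lra); lra).
    assert (0 <= z^2) by apply pow2_ge_0.
    assert (0 <= Psi eta z ^ 6) by (apply pow_le; left; apply Psi_pos).
    unfold Ff, c.
    replace (4 * b * mu * z ^ 2 * Psi eta z ^ 6 * (1 - z) * Pr z) with
      ((4 * b * mu * (1 - z)) * (z ^ 2 * Psi eta z ^ 6 * Pr z)) by ring.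
    replace (40 * b * mu * B * (1 - z)) with ((4 * b * mu * (1 - z)) * (1 * B * 10)) by ring.
    apply Rmult_le_compat_l; [left; apply Rmult_lt_0_compat; [apply Rmult_lt_0_compat; [apply Rmult_lt_0_compat|]|]; lra|].
    apply Rmult_le_compat; try lra; [apply Rmult_le_pos; lra|]. apply Rmult_le_compat; lra. }
  destruct (inverse_ode (ff b mu eta) r0 c Hr0 Hc) as [r [Hr [Hrr0 [Cr Dr]]]].
  - intros z Hz. apply ff_cont; auto.
  - intros z Hz. unfold ff. apply Rinv_0_lt_compat, Ff_pos; auto.
  - intros z Hz. unfold ff. apply Rinv_le_contravar; [apply Ff_pos; auto; lra|]. apply Fbound; auto.
  - set (Y := fun t => Psi eta (r t)).
    assert (HY0 : Y 0 = h2).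
    { unfold Y, Psi. rewrite Hrr0. rewrite <- (exp_ln h2) by auto. f_equal. unfold Lf, eta.
      assert (0 < 1 - r0) by lra.
      rewrite ln_div by (apply Rmult_lt_0_compat; apply pow_lt; lra).
      rewrite !ln_mult by (apply pow_lt; lra).
      rewrite !(Rcomplements.ln_pow) by lra.
      simpl INR. field. }
    exists (G0f mu r Y), (G1f r Y), Y, (G3f mu (h0^3*h3) r Y).
    apply build_sol; auto.
    + intros t Ht. assert (Hrt := Hr t). assert (Hrt0 : 0 < r t < 1) by lra.
      split; [lra|split; [apply Psi_pos|split]].
      * eapply dpl_eq; [apply Dr; auto|]. unfold ff, Ff. fold (Y t). rewrite Rinv_inv. unfold Y; auto.
      * unfold Y. eapply dpl_eq.
        -- apply (derivable_pt_lim_comp r (Psi eta)); [apply Dr; auto|apply Psi_der; auto].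
        -- unfold ff, Ff. rewrite Rinv_inv. unfold dLf, qB, Pr.
           assert (HS := Sf_pos (r t) ltac:(lra)). unfold Sf in *.
           field. repeat split; lra.
    + apply (continuity_pt_comp r (Psi eta)); auto. rewrite Hrr0. eapply dpl_cont. apply Psi_der; auto.
    + lra.
    + apply Psi_pos.
    + rewrite Hrr0, HY0. unfold mu, r0. field. lra.
    + rewrite Hrr0, HY0. unfold r0. field. lra.
Qed.

Lemma pB_sym x y : pB x y = pB y x.
Proof. unfold pB; ring. Qed.

Lemma sol_swap b h0 h1 h2 h3 g0 g1 g2 g3 : is_global_solution b h0 h2 h1 h3 g0 g1 g2 g3 ->
  is_global_solution b h0 h1 h2 h3 g0 g2 g1 g3.
Proof.
  intros (E0&E1&E2&E3&R0&R1&R2&R3&D).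
  do 8 (split; [auto|]). intros t0 Ht; destruct (D t0 Ht) as (D0&D1&D2&D3).
  split; [|split; [exact D2|split; [exact D1|]]].
  - unfold rhs00 in *. rewrite pB_sym. auto.
  - unfold rhs33 in *. rewrite pB_sym. auto.
Qed.

Theorem theorem5p3 (h0 h1 h2 h3 : R) :
  0 < h0 -> 0 < h1 -> 0 < h2 -> 0 < h3 ->
  let deth := h0 * h1 * h2 * h3 in
  let beta := 1 / (6 * deth ^ 2) in
  (exists g0 g1 g2 g3 : R -> R, is_global_solution beta h0 h1 h2 h3 g0 g1 g2 g3) /\
  (forall g0 g1 g2 g3 : R -> R,
    is_global_solution beta h0 h1 h2 h3 g0 g1 g2 g3 ->
    tends_at_infty g0 0 /\ tends_at_infty g1 0 /\ tends_at_infty g2 0 /\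
    strict_incr_on_nonneg g3 /\ diverges_at_infty g3 /\
    tends_at_infty (fun t => g1 t / g2 t) 1 /\
    (h1 = h2 ->
      let mu := h0 ^ 3 * h3 / deth in
      forall t, 0 <= t ->
        g0 t = Rpower mu (1/2) * Rpower (24 * mu * beta * t + / h1 ^ 6) (- (1/6)) /\
        g1 t = Rpower (24 * mu * beta * t + / h1 ^ 6) (- (1/6)) /\
        g2 t = Rpower (24 * mu * beta * t + / h1 ^ 6) (- (1/6)) /\
        g3 t = h1 ^ 3 * h3 * Rpower (24 * mu * beta * t + / h1 ^ 6) (1/2)) /\
    (h1 < h2 ->
      let eta := (h1 * h2) ^ 25 /
                 ((h2 - h1) ^ 4 * (2 * h2 ^ 2 + h1 * h2 + 2 * h1 ^ 2) ^ 3) in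
      (forall t, 0 <= t -> g1 t < g2 t) /\
      strict_decr_on_nonneg g2 /\
      strict_incr_on_nonneg (fun t => g1 t / g2 t) /\
      (forall t, 0 <= t ->
        (g1 t * g2 t) ^ 25 =
        eta * (g2 t - g1 t) ^ 4 * (2 * g2 t ^ 2 + g1 t * g2 t + 2 * g1 t ^ 2) ^ 3))).
Proof.
  intros P0 P1 P2 P3 deth beta.
  assert (Hb : 0 < beta).
  { unfold beta. apply Rdiv_lt_0_compat; [lra|]. apply Rmult_lt_0_compat; [lra|]. apply pow_lt.
    unfold deth. repeat apply Rmult_lt_0_compat; auto. }
  split.
  - destruct (Rtotal_order h1 h2) as [H|[H|H]].
    + apply exist_less; auto.
    + subst h2. apply exist_equal; auto.
    + destruct (exist_less beta h0 h2 h1 h3) as (g0&g1&g2&g3&Hs); auto.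
      exists g0, g2, g1, g3. apply sol_swap. auto.
  - intros g0 g1 g2 g3 Hs.
    destruct (sol_props _ _ _ _ _ _ _ _ _ Hb P0 P1 P2 P3 Hs) as (A1&A2&A3&A4&A5&A6).
    split; [auto|split; [auto|split; [auto|split; [auto|split; [auto|split; [auto|split]]]]]].
    + intros H12. apply (sol_equal _ _ _ _ _ _ _ _ _ Hb P0 P1 P2 P3 Hs H12).
    + intros H12. apply (sol_less _ _ _ _ _ _ _ _ _ Hb P0 P1 P2 P3 Hs H12).
Qed.
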